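(* Let $(w,F)\in X\times\mathbb R$ be a solution of the height equation. (i) If $w>0$ on $T$, and if $F$ is such that $\Phi_p(p;1/F^2)\ge0$ for $p\in[-1,0]$, then $A(1/F^2)<0$. (ii) If $F=F_{\mathrm{cr}}$, then $w\equiv0$.
   Context: Fix $\alpha\in(0,1)$, $\rho\in C^{2+\alpha}([-1,0])$ with $\rho>0$, $\rho_p\le0$, and $H\in C^{3+\alpha}([-1,0])$ with $H(-1)=0$, $H(0)=1$, $H_p>0$. Let $R=\mathbb R\times(-1,0)$ (coordinates $(q,p)$), $T=\mathbb R\times\{0\}$, $B=\mathbb R\times\{-1\}$. For $F>0$, $(w,F)$ solves the height equation if $h=H+w$ satisfies $\big(-\frac{1+h_q^2}{2h_p^2}+\frac1{2H_p^2}\big)_p+\big(\frac{h_q}{h_p}\big)_q-\frac1{F^2}\rho_p(h-H)=0$ in $R$, $\frac{1+h_q^2}{2h_p^2}-\frac1{2H_p^2}+\frac1{F^2}\rho(h-1)=0$ on $T$, $h=0$ on $B$, and $0<\inf_R(H_p+w_p)<\infty$. $X$ consists of $w\in C^{3+\alpha}(\overline R)$ with finite $C^{3+\alpha}$ norm, even in $q$, with $w$ and its derivatives of order $\le2$ tending to $0$ uniformly as $|q|\to\infty$, and $w=0$ on $B$. For $\mu\ge0$, $\Phi(\cdot;\mu)$ is the solution of $(\Phi_p/H_p^3)_p-\mu\rho_p\Phi=0$ on $(-1,0)$, $\Phi(-1)=0$, $\Phi_p(-1)=1$, and $A(\mu):=-\Phi_p(0;\mu)/H_p(0)^3+\mu\rho(0)\Phi(0;\mu)$.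 $\mu_{\mathrm{cr}}$ is the smallest positive $\mu$ with $A(\mu)=0$ (equivalently, for which $(\phi_p/H_p^3)_p-\mu\rho_p\phi=0$, $\phi(-1)=0$, $-\phi_p(0)/H_p(0)^3+\mu\rho(0)\phi(0)=0$ has a nontrivial solution), and $F_{\mathrm{cr}}=\mu_{\mathrm{cr}}^{-1/2}$. *)

(* Defs.v *)
From Stdlib Require Import Reals List.
From Coquelicot Require Import Coquelicot.
Open Scope R_scope.

(* f : R -> R is k times differentiable (two-sided) on all of R, its
   derivatives of order <= k are continuous at every point of [-1,0], and the
   k-th derivative is alpha-Hoelder on [-1,0].  Every C^{k+alpha}([-1,0])
   function is the restriction of such an f (1-d Whitney extension), and all
   quantities in the theorem only involve values on [-1,0]. *)
Definition Ck_alpha_interval (k : nat) (a : R) (f : R -> R) : Prop :=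
  (forall (n : nat) (x : R), (n < k)%nat -> ex_derive (Derive_n f n) x) /\
  (forall (n : nat) (x : R), (n <= k)%nat -> -1 <= x <= 0 ->
      continuous (Derive_n f n) x) /\
  (exists C : R, forall x y : R, -1 <= x <= 0 -> -1 <= y <= 0 ->
      Rabs (Derive_n f k x - Derive_n f k y) <= C * Rpower (Rabs (x - y)) a).

Definition dq (f : R -> R -> R) : R -> R -> R :=
  fun q p => Derive (fun q' => f q' p) q.
Definition dp (f : R -> R -> R) : R -> R -> R :=
  fun q p => Derive (fun p' => f q p') p.

(* iterated partial derivative along a word of directions
   (true = d/dq, false = d/dp), the head of the list applied last *)
Fixpoint pd (l : list bool) (f : R -> R -> R) : R -> R -> R :=
  match l with
  | nil => f
  | b :: l' => (if b then dq else dp) (pd l' f)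
  end.

Definition in_Rbar (q p : R) : Prop := -1 <= p <= 0.
Definition in_R (q p : R) : Prop := -1 < p < 0.

Definition dist2 (q1 p1 q2 p2 : R) : R :=
  sqrt ((q1 - q2) ^ 2 + (p1 - p2) ^ 2).

(* As in the 1-d case
   w is given on R x R (an extension across the boundary lines), all iterated
   partial derivatives of order <= 3 exist, are jointly continuous on R-bar,
   bounded on R-bar, and those of order 3 are alpha-Hoelder on R-bar. *)
Definition C3_alpha_strip (a : R) (w : R -> R -> R) : Prop :=
  (forall (l : list bool) (q p : R), (length l < 3)%nat ->
      ex_derive (fun q' => pd l w q' p) q /\ ex_derive (fun p' => pd l w q p') p) /\
  (forall (l : list bool) (q p : R), (length l <= 3)%nat -> in_Rbar q p ->
      continuous (fun z : R * R => pd l w (fst z) (snd z)) (q, p)) /\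
  (forall l : list bool, (length l <= 3)%nat ->
      exists M : R, forall q p, in_Rbar q p -> Rabs (pd l w q p) <= M) /\
  (forall l : list bool, length l = 3%nat ->
      exists C : R, forall q1 p1 q2 p2, in_Rbar q1 p1 -> in_Rbar q2 p2 ->
        Rabs (pd l w q1 p1 - pd l w q2 p2) <= C * Rpower (dist2 q1 p1 q2 p2) a).

Definition in_X (a : R) (w : R -> R -> R) : Prop :=
  C3_alpha_strip a w /\
  (forall q p, in_Rbar q p -> w (- q) p = w q p) /\
  (forall l : list bool, (length l <= 2)%nat ->
      forall eps : R, 0 < eps -> exists M : R, forall q p,
        M <= Rabs q -> in_Rbar q p -> Rabs (pd l w q p) < eps) /\
  (forall q, w q (-1) = 0).

Definition height_eq (rho H : R -> R) (w : R -> R -> R) (F : R) : Prop :=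
  let h := fun q p => H p + w q p in
  let hq := dq h in
  let hp := dp h in
  0 < F /\
  (forall q p, in_R q p ->
     Derive (fun p' => - (1 + hq q p' ^ 2) / (2 * hp q p' ^ 2)
                       + 1 / (2 * Derive H p' ^ 2)) p
     + Derive (fun q' => hq q' p / hp q' p) q
     - / F ^ 2 * Derive rho p * (h q p - H p) = 0) /\
  (forall q, (1 + hq q 0 ^ 2) / (2 * hp q 0 ^ 2) - 1 / (2 * Derive H 0 ^ 2)
             + / F ^ 2 * rho 0 * (h q 0 - 1) = 0) /\
  (forall q, h q (-1) = 0) /\
  (* 0 < inf_R (H_p + w_p) < oo  (the upper bound is automatic for a
     real-valued function on a nonempty set) *)
  (exists delta : R, 0 < delta /\
     forall q p, in_R q p -> delta <= Derive H p + dp w q p).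

Definition is_Phi (rho H : R -> R) (Phi : R -> R -> R) : Prop :=
  forall mu : R, 0 <= mu ->
    (forall p, ex_derive (Phi mu) p) /\
    (forall p, -1 < p < 0 ->
       ex_derive (fun p' => Derive (Phi mu) p' / Derive H p' ^ 3) p /\
       Derive (fun p' => Derive (Phi mu) p' / Derive H p' ^ 3) p
         - mu * Derive rho p * Phi mu p = 0) /\
    Phi mu (-1) = 0 /\
    Derive (Phi mu) (-1) = 1.

Definition A_fun (rho H : R -> R) (Phi : R -> R -> R) (mu : R) : R :=
  - Derive (Phi mu) 0 / Derive H 0 ^ 3 + mu * rho 0 * Phi mu 0.

Definition is_mu_cr (rho H : R -> R) (Phi : R -> R -> R) (mu : R) : Prop :=
  0 < mu /\ A_fun rho H Phi mu = 0 /\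
  (forall mu', 0 < mu' < mu -> A_fun rho H Phi mu' <> 0).

(* Main.v *)
Require Import Defs.
From Stdlib Require Import Reals List Lra Lia Psatz Classical.
From Coquelicot Require Import Coquelicot.
Open Scope R_scope.

Lemma ball_R (x e y : R) : ball x e y <-> Rabs (y - x) < e.
Proof. split; intro H; exact H. Qed.

Lemma loc_open (a b x : R) : a < x < b -> locally x (fun y => a < y < b).
Proof.
  intros [H1 H2].
  assert (He : 0 < Rmin (x - a) (b - x)) by (apply Rmin_pos; lra).
  exists (mkposreal _ He). intros y Hy. apply ball_R in Hy. simpl in Hy.
  pose proof (Rmin_l (x-a) (b-x)); pose proof (Rmin_r (x-a) (b-x)).
  apply Rabs_def2 in Hy. destruct Hy as [Hy1 Hy2]. unfold minus, plus, opp in Hy1, Hy2; simpl in Hy1, Hy2. split; lra.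
Qed.

Definition cl (a b x : R) := Rmax a (Rmin b x).

Lemma cl_in (a b x : R) : a <= b -> a <= cl a b x <= b.
Proof. intros. unfold cl. unfold Rmax, Rmin. repeat destruct Rle_dec; lra. Qed.

Lemma cl_id (a b x : R) : a <= x <= b -> cl a b x = x.
Proof. intros. unfold cl, Rmax, Rmin. repeat destruct Rle_dec; lra. Qed.

Lemma cl_cl (a b x : R) : a <= b -> cl a b (cl a b x) = cl a b x.
Proof. intros. apply cl_id. apply cl_in; auto. Qed.

Lemma cl_lip (a b x y : R) : a <= b -> Rabs (cl a b x - cl a b y) <= Rabs (x - y).
Proof.
  intros. unfold cl, Rmax, Rmin, Rabs. repeat destruct Rle_dec; repeat destruct Rcase_abs; lra.
Qed.

Lemma cl_cont (a b x : R) : a <= b -> continuous (cl a b) x.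
Proof.
  intros Hab. apply filterlim_locally. intros eps. exists eps. intros y Hy.
  apply ball_R in Hy. apply ball_R. eapply Rle_lt_trans. apply cl_lip; auto. exact Hy.
Qed.

Lemma cont_cl (a b x : R) (f : R -> R) : a <= x <= b -> continuous f x ->
  continuous (fun y => f (cl a b y)) x.
Proof.
  intros Hx Hf. apply (continuous_comp (cl a b) f). apply cl_cont; lra. rewrite cl_id; auto.
Qed.

Lemma cont_cl_all (a b : R) (g : R -> R) : a <= b ->
  (forall x, a <= x <= b -> continuous (fun y => g (cl a b y)) x) ->
  forall x, continuous (fun y => g (cl a b y)) x.
Proof.
  intros Hab Hg x.
  apply continuous_ext with (f := fun y => (fun z => g (cl a b z)) (cl a b y)).
  { intros y. simpl. rewrite cl_cl; auto. }
  apply (continuous_comp (cl a b) (fun z => g (cl a b z))). apply cl_cont; auto. apply Hg. apply cl_in; auto.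
Qed.

Lemma is_derive_cl (a b x : R) (f : R -> R) l : a < x < b -> is_derive f x l ->
  is_derive (fun y => f (cl a b y)) x l.
Proof.
  intros Hx Hf. eapply is_derive_ext_loc; [|exact Hf].
  eapply filter_imp; [|apply (loc_open a b x Hx)]. intros y Hy. simpl.
  rewrite cl_id; auto; lra.
Qed.

Lemma FTC_cl (a b : R) (f g : R -> R) : a < b ->
  (forall x, a < x < b -> is_derive f x (g x)) ->
  (forall x, a <= x <= b -> continuous (fun y => f (cl a b y)) x) ->
  (forall x, a <= x <= b -> continuous (fun y => g (cl a b y)) x) ->
  is_RInt g a b (f b - f a).
Proof.
  intros Hab Hd Hf Hg.
  set (gc := fun y => g (cl a b y)).
  assert (Hgc : forall x, continuous gc x) by (apply cont_cl_all; auto; lra).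
  assert (Hex : forall u v, ex_RInt gc u v) by (intros; apply (@ex_RInt_continuous R_CompleteNormedModule); auto).
  set (K := fun x => f (cl a b x) - RInt gc a x).
  assert (HK : forall x, a < x < b -> is_derive K x 0).
  { intros x Hx. unfold K. replace 0 with (g x - gc x).
    2:{ unfold gc. rewrite cl_id; lra. }
    apply (is_derive_minus (fun x => f (cl a b x)) (fun x => RInt gc a x)).
    apply is_derive_cl; auto.
    apply (is_derive_RInt gc (fun x => RInt gc a x) a).
    apply filter_forall. intros; apply (@RInt_correct R_CompleteNormedModule); auto. auto. }
  assert (HKc : forall x, a <= x <= b -> continuity_pt K x).
  { intros x Hx. apply continuity_pt_filterlim. unfold K.
    apply (continuous_minus (fun x => f (cl a b x)) (fun x => RInt gc a x)).
    auto. apply (continuous_RInt_1 gc a x (fun x => RInt gc a x)).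
    apply filter_forall. intros; apply (@RInt_correct R_CompleteNormedModule); auto. }
  destruct (MVT_gen K a b (fun _ => 0)) as [c [Hc Hc2]].
  { rewrite Rmin_left, Rmax_right; try lra. auto. }
  { rewrite Rmin_left, Rmax_right; try lra. auto. }
  unfold K in Hc2. rewrite RInt_point in Hc2.
  rewrite !cl_id in Hc2 by lra.
  assert (E : RInt gc a b = f b - f a).
  { unfold zero in Hc2. simpl in Hc2. lra. }
  apply is_RInt_ext with gc.
  { intros x Hx. rewrite Rmin_left, Rmax_right in Hx by lra. unfold gc. rewrite cl_id; lra. }
  rewrite <- E. apply (@RInt_correct R_CompleteNormedModule). auto.
Qed.

Lemma MVT_open (f df : R -> R) (u v : R) : u < v ->
  (forall x, u < x < v -> is_derive f x (df x)) ->
  (forall x, u <= x <= v -> continuity_pt f x) ->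
  exists c, u < c < v /\ f v - f u = df c * (v - u).
Proof.
  intros Huv Hd Hc.
  assert (pr1 : forall c, u < c < v -> derivable_pt f c).
  { intros c Hc'. apply ex_derive_Reals_0. eexists; apply Hd; auto. }
  assert (pr2 : forall c, u < c < v -> derivable_pt id c).
  { intros c _. apply derivable_pt_id. }
  destruct (MVT f id u v pr1 pr2 Huv Hc) as [c [P Hc2]].
  { intros; apply derivable_continuous_pt, derivable_pt_id. }
  exists c; split; auto.
  rewrite !Derive_Reals in Hc2.
  rewrite (is_derive_unique f c (df c)) in Hc2 by auto.
  rewrite (is_derive_unique id c 1) in Hc2.
  2:{ apply is_derive_Reals. apply derivable_pt_lim_id. }
  unfold id in Hc2. lra.
Qed.

Lemma cpt_of_cont (f : R -> R) x : continuous f x -> continuity_pt f x.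
Proof. intros H; apply continuity_pt_filterlim; exact H. Qed.

Lemma MVT_cl (f df : R -> R) (a b u v : R) : a <= u -> u < v -> v <= b ->
  (forall x, a < x < b -> is_derive f x (df x)) ->
  (forall x, a <= x <= b -> continuous (fun y => f (cl a b y)) x) ->
  exists c, u < c < v /\ f v - f u = df c * (v - u).
Proof.
  intros H1 H2 H3 Hd Hc.
  destruct (MVT_open (fun y => f (cl a b y)) df u v H2) as [c [Hc1 Hc2]].
  { intros x Hx. apply is_derive_cl; [lra|]. apply Hd; lra. }
  { intros x Hx. apply cpt_of_cont. apply Hc; lra. }
  exists c; split; auto. rewrite !cl_id in Hc2 by lra. auto.
Qed.

Lemma mono_cl (f df : R -> R) (a b : R) :
  (forall x, a < x < b -> is_derive f x (df x)) ->
  (forall x, a < x < b -> df x <= 0) ->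
  (forall x, a <= x <= b -> continuous (fun y => f (cl a b y)) x) ->
  forall u v, a <= u -> u <= v -> v <= b -> f v <= f u.
Proof.
  intros Hd Hs Hc u v H1 H2 H3. destruct (Req_dec u v) as [->|Hne]; [lra|].
  destruct (MVT_cl f df a b u v) as [c [Hc1 Hc2]]; auto; try lra.
  assert (df c <= 0) by (apply Hs; lra). nra.
Qed.

Lemma lip_cl (f df : R -> R) (a b L : R) :
  (forall x, a < x < b -> is_derive f x (df x)) ->
  (forall x, a < x < b -> Rabs (df x) <= L) ->
  (forall x, a <= x <= b -> continuous (fun y => f (cl a b y)) x) ->
  forall u v, a <= u <= b -> a <= v <= b -> Rabs (f u - f v) <= L * Rabs (u - v).
Proof.
  intros Hd Hs Hc.
  assert (K : forall u v, a <= u -> u < v -> v <= b -> Rabs (f u - f v) <= L * Rabs (u - v)).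
  { intros u v H1 H2 H3.
    destruct (MVT_cl f df a b u v) as [c [Hc1 Hc2]]; auto.
    replace (f u - f v) with (- (df c * (v - u))) by lra.
    rewrite Rabs_Ropp, Rabs_mult. rewrite <- Rabs_Ropp with (x := u - v).
    replace (- (u - v)) with (v - u) by ring.
    apply Rmult_le_compat_r. apply Rabs_pos. apply Hs; lra. }
  intros u v Hu Hv. destruct (Rtotal_order u v) as [H|[H|H]].
  - apply K; lra.
  - subst. rewrite !Rminus_diag, Rabs_R0, Rmult_0_r. lra.
  - rewrite (Rabs_minus_sym (f u)), (Rabs_minus_sym u). apply K; lra.
Qed.

Lemma deriv_step (f : R -> R) (a b L e y : R) :
  (forall x, a <= x <= b -> ex_derive f x) ->
  (forall x z, a < x < b -> a < z < b -> Rabs (Derive f x - Derive f z) <= L * Rabs (x - z)) ->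
  a <= e <= b -> a < y < b -> e <> y ->
  Rabs (Derive f e - Derive f y) <= L * Rabs (e - y).
Proof.
  intros Hex Hlip He Hy Hne.
  apply Rle_plus_epsilon. intros eps Heps.
  assert (Hd : derivable_pt_lim f e (Derive f e)).
  { apply is_derive_Reals. apply Derive_correct. apply Hex; auto. }
  destruct (Hd eps Heps) as [del Hdel].
  assert (Hdp := cond_pos del).
  set (h := Rmin (del / 2) (Rabs (y - e) / 2)).
  assert (Hye : 0 < Rabs (y - e)) by (apply Rabs_pos_lt; lra).
  assert (Hh : 0 < h) by (apply Rmin_pos; lra).
  assert (Hh1 : h <= del / 2) by apply Rmin_l.
  assert (Hh2 : h <= Rabs (y - e) / 2) by apply Rmin_r.
  assert (Hcont : forall x, a <= x <= b -> continuity_pt f x).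
  { intros x Hx. apply cpt_of_cont. apply (ex_derive_continuous (K:=R_AbsRing) (V:=R_NormedModule)). auto. }
  assert (Hderiv : forall x, a <= x <= b -> is_derive f x (Derive f x)).
  { intros; apply Derive_correct; auto. }
  destruct (Rlt_dec e y) as [Hlt|Hgt].
  - rewrite Rabs_right in Hh2 by lra.
    destruct (MVT_open f (Derive f) e (e + h)) as [c [Hc1 Hc2]]; try lra.
    { intros; apply Hderiv; lra. }
    { intros; apply Hcont; lra. }
    assert (Q := Hdel h ltac:(lra) ltac:(rewrite Rabs_right; lra)).
    replace ((f (e + h) - f e) / h) with (Derive f c) in Q.
    2:{ rewrite Hc2. field. lra. }
    assert (Hl := Hlip c y ltac:(lra) Hy).
    assert (0 <= L).
    { assert (0 <= L * Rabs (c - y)) by (eapply Rle_trans; [apply Rabs_pos|exact Hl]).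
      assert (0 < Rabs (c - y)) by (apply Rabs_pos_lt; lra). nra. }
    rewrite (Rabs_left (c - y)) in Hl by lra. rewrite (Rabs_left (e - y)) by lra.
    rewrite Rabs_minus_sym in Q.
    pose proof (Rabs_triang (Derive f e - Derive f c) (Derive f c - Derive f y)).
    replace (Derive f e - Derive f c + (Derive f c - Derive f y)) with (Derive f e - Derive f y) in H0 by ring.
    nra.
  - assert (y < e) by lra.
    rewrite Rabs_left in Hh2 by lra.
    destruct (MVT_open f (Derive f) (e - h) e) as [c [Hc1 Hc2]]; try lra.
    { intros; apply Hderiv; lra. }
    { intros; apply Hcont; lra. }
    assert (Q := Hdel (- h) ltac:(lra) ltac:(rewrite Rabs_left; lra)).
    replace ((f (e + - h) - f e) / - h) with (Derive f c) in Q.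
    2:{ replace (e + - h) with (e - h) by ring. replace (e - (e - h)) with h in Hc2 by ring.
        rewrite <- (Ropp_involutive (f (e - h) - f e)).
        replace (- (f (e - h) - f e)) with (Derive f c * h) by lra. field. lra. }
    assert (Hl := Hlip c y ltac:(lra) Hy).
    assert (0 <= L).
    { assert (0 <= L * Rabs (c - y)) by (eapply Rle_trans; [apply Rabs_pos|exact Hl]).
      assert (0 < Rabs (c - y)) by (apply Rabs_pos_lt; lra). nra. }
    rewrite (Rabs_right (c - y)) in Hl by lra. rewrite (Rabs_right (e - y)) by lra.
    rewrite Rabs_minus_sym in Q.
    pose proof (Rabs_triang (Derive f e - Derive f c) (Derive f c - Derive f y)).
    replace (Derive f e - Derive f c + (Derive f c - Derive f y)) with (Derive f e - Derive f y) in H1 by ring.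
    nra.
Qed.

Lemma deriv_lip_closed (f : R -> R) (a b L : R) :
  (forall x, a <= x <= b -> ex_derive f x) ->
  (forall x z, a < x < b -> a < z < b -> Rabs (Derive f x - Derive f z) <= L * Rabs (x - z)) ->
  forall x y, a <= x <= b -> a <= y <= b ->
  Rabs (Derive f x - Derive f y) <= L * Rabs (x - y).
Proof.
  intros Hex Hlip x y Hx Hy.
  destruct (Req_dec x y) as [->|Hne].
  { rewrite !Rminus_diag, Rabs_R0, Rmult_0_r. lra. }
  set (m := (x + y) / 2).
  assert (Hm : a < m < b).
  { unfold m. destruct (Rlt_dec x y); lra. }
  assert (H1 := deriv_step f a b L x m Hex Hlip Hx Hm ltac:(unfold m; lra)).
  assert (H2 := deriv_step f a b L y m Hex Hlip Hy Hm ltac:(unfold m; lra)).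
  rewrite (Rabs_minus_sym (Derive f y)), (Rabs_minus_sym y) in H2.
  pose proof (Rabs_triang (Derive f x - Derive f m) (Derive f m - Derive f y)).
  replace (Derive f x - Derive f m + (Derive f m - Derive f y)) with (Derive f x - Derive f y) in H by ring.
  assert (Rabs (x - m) + Rabs (m - y) = Rabs (x - y)).
  { unfold m. destruct (Rlt_dec x y).
    rewrite !Rabs_left by lra. lra. rewrite !Rabs_right by lra. lra. }
  nra.
Qed.

Lemma lip_cont_cl (g : R -> R) (a b L : R) : a <= b ->
  (forall x y, a <= x <= b -> a <= y <= b -> Rabs (g x - g y) <= L * Rabs (x - y)) ->
  forall x, continuous (fun y => g (cl a b y)) x.
Proof.
  intros Hab Hl x. apply filterlim_locally. intros eps.
  assert (HL : 0 < Rabs L + 1) by (pose proof (Rabs_pos L); lra).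
  assert (He : 0 < eps / (Rabs L + 1)) by (apply Rdiv_lt_0_compat; [apply cond_pos|lra]).
  exists (mkposreal _ He). intros y Hy. apply ball_R in Hy. simpl in Hy. apply ball_R.
  eapply Rle_lt_trans. apply Hl; apply cl_in; auto.
  pose proof (cl_lip a b y x Hab). pose proof (Rabs_pos (cl a b y - cl a b x)).
  pose proof (Rle_abs L).
  apply Rle_lt_trans with (Rabs L * Rabs (y - x)).
  { apply Rle_trans with (Rabs L * Rabs (cl a b y - cl a b x)).
    apply Rmult_le_compat_r; auto. apply Rmult_le_compat_l; auto. apply Rabs_pos. }
  apply Rle_lt_trans with ((Rabs L + 1) * Rabs (y - x)). pose proof (Rabs_pos (y-x)); nra.
  assert (Hy' : Rabs (y - x) < eps / (Rabs L + 1)) by exact Hy.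
  assert (E : pos eps = (Rabs L + 1) * (eps / (Rabs L + 1))) by (field; lra).
  rewrite E. apply Rmult_lt_compat_l; lra.
Qed.

Lemma cmul (f g : R -> R) x : continuous f x -> continuous g x -> continuous (fun y => f y * g y) x.
Proof. intros; apply (continuous_mult (K:=R_AbsRing)); auto. Qed.
Lemma cplus (f g : R -> R) x : continuous f x -> continuous g x -> continuous (fun y => f y + g y) x.
Proof. intros; apply (continuous_plus (V:=R_NormedModule)); auto. Qed.
Lemma copp (f : R -> R) x : continuous f x -> continuous (fun y => - f y) x.
Proof. intros; apply (continuous_opp (V:=R_NormedModule)); auto. Qed.
Lemma cminus (f g : R -> R) x : continuous f x -> continuous g x -> continuous (fun y => f y - g y) x.
Proof. intros; apply (continuous_minus (V:=R_NormedModule)); auto. Qed.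
Lemma cinv (f : R -> R) x : continuous f x -> f x <> 0 -> continuous (fun y => / f y) x.
Proof. intros; apply continuous_Rinv_comp; auto. Qed.
Lemma cdiv (f g : R -> R) x : continuous f x -> continuous g x -> g x <> 0 -> continuous (fun y => f y / g y) x.
Proof. intros; unfold Rdiv; apply cmul; auto; apply cinv; auto. Qed.
Lemma cpow (f : R -> R) n x : continuous f x -> continuous (fun y => f y ^ n) x.
Proof. intros Hf. induction n. simpl. apply continuous_const. simpl. apply cmul; auto. Qed.
Lemma ccst (c x : R) : continuous (fun _ => c) x.
Proof. apply continuous_const. Qed.

Record hyp1 (rho H : R -> R) : Prop := {
  h_rho_d : forall x, ex_derive rho x;
  h_rhop_c : forall x, -1 <= x <= 0 -> continuous (Derive rho) x;
  h_rho_pos : forall p, -1 <= p <= 0 -> 0 < rho p;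
  h_rhop_neg : forall p, -1 <= p <= 0 -> Derive rho p <= 0;
  h_H_d : forall x, ex_derive H x;
  h_Hp_d : forall x, ex_derive (Derive H) x;
  h_Hpp_c : forall x, -1 <= x <= 0 -> continuous (Derive (Derive H)) x;
  h_Hp_pos : forall p, -1 <= p <= 0 -> 0 < Derive H p }.

Lemma bound_cont (f : R -> R) (a b : R) : a <= b ->
  (forall x, a <= x <= b -> continuous f x) -> exists B, forall x, a <= x <= b -> Rabs (f x) <= B.
Proof.
  intros Hab Hc.
  destruct (continuity_ab_maj (fun x => Rabs (f x)) a b Hab) as [M [HM _]].
  { intros c Hc'. apply cpt_of_cont.
    apply (continuous_comp f Rabs). auto. apply continuity_pt_filterlim. apply Rcontinuity_abs. }
  exists (Rabs (f M)). auto.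
Qed.

Lemma min_pos_cont (f : R -> R) (a b : R) : a <= b ->
  (forall x, a <= x <= b -> continuous f x) -> (forall x, a <= x <= b -> 0 < f x) ->
  exists m, 0 < m /\ forall x, a <= x <= b -> m <= f x.
Proof.
  intros Hab Hc Hp.
  destruct (continuity_ab_min f a b Hab) as [M [HM HM2]].
  { intros c Hc'. apply cpt_of_cont. auto. }
  exists (f M). split; auto.
Qed.

Definition psi (H Ph : R -> R) (p : R) := Derive Ph p / Derive H p ^ 3.


Lemma cont_of_ex_derive (f : R -> R) x : ex_derive f x -> continuous f x.
Proof. apply (ex_derive_continuous (K:=R_AbsRing) (V:=R_NormedModule)). Qed.

Lemma lip_open_of_deriv (g dg : R -> R) (a b L : R) :
  (forall x, a < x < b -> is_derive g x (dg x)) ->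
  (forall x, a < x < b -> Rabs (dg x) <= L) ->
  forall u v, a < u < b -> a < v < b -> Rabs (g u - g v) <= L * Rabs (u - v).
Proof.
  intros Hd Hb u v Hu Hv.
  destruct (Rle_dec u v) as [Huv|Huv].
  - apply (lip_cl g dg u v L).
    + intros; apply Hd; lra.
    + intros; apply Hb; lra.
    + intros x Hx. apply cont_cl; auto. apply cont_of_ex_derive. eexists; apply Hd; lra.
    + lra.
    + lra.
  - apply (lip_cl g dg v u L).
    + intros; apply Hd; lra.
    + intros; apply Hb; lra.
    + intros x Hx. apply cont_cl; auto. apply cont_of_ex_derive. eexists; apply Hd; lra.
    + lra.
    + lra.
Qed.

Lemma phi_lip rho H Phi mu : hyp1 rho H -> is_Phi rho H Phi -> 0 <= mu ->
  exists L, forall x y, -1 <= x <= 0 -> -1 <= y <= 0 ->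
    Rabs (Derive (Phi mu) x - Derive (Phi mu) y) <= L * Rabs (x - y).
Proof.
  intros HY HP Hmu.
  destruct (HP mu Hmu) as [Hd [Hode [H0 H1]]].
  set (f := Phi mu) in *.
  destruct (bound_cont f (-1) 0) as [BF HBF]; [lra| intros; apply cont_of_ex_derive; auto |].
  destruct (bound_cont (Derive rho) (-1) 0) as [Br HBr]; [lra| intros; apply (h_rhop_c _ _ HY); auto |].
  destruct (bound_cont (Derive H) (-1) 0) as [B1 HB1]; [lra| intros; apply cont_of_ex_derive; apply (h_Hp_d _ _ HY) |].
  destruct (bound_cont (Derive (Derive H)) (-1) 0) as [B2 HB2]; [lra| intros; apply (h_Hpp_c _ _ HY); auto |].
  set (ps := fun p => Derive f p / Derive H p ^ 3).
  set (L1 := mu * (Br * BF)).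
  assert (Hps : forall u v, -1 < u < 0 -> -1 < v < 0 -> Rabs (ps u - ps v) <= L1 * Rabs (u - v)).
  { apply (lip_open_of_deriv ps (fun p => mu * Derive rho p * f p)).
    - intros x Hx. destruct (Hode x Hx) as [He Heq].
      replace (mu * Derive rho x * f x) with (Derive ps x) by (unfold ps; lra).
      apply Derive_correct. exact He.
    - intros x Hx. rewrite !Rabs_mult, (Rabs_right mu) by lra. unfold L1.
      rewrite Rmult_assoc. apply Rmult_le_compat_l; auto. apply Rmult_le_compat; try apply Rabs_pos.
      apply HBr; lra. apply HBF; lra. }
  set (Bps := Rabs (ps (-1/2)) + L1).
  assert (HL1 : 0 <= L1).
  { unfold L1. apply Rmult_le_pos; auto. apply Rmult_le_pos.
    eapply Rle_trans; [apply Rabs_pos| apply (HBr 0); lra].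
    eapply Rle_trans; [apply Rabs_pos| apply (HBF 0); lra]. }
  assert (HBps : forall u, -1 < u < 0 -> Rabs (ps u) <= Bps).
  { intros u Hu. assert (Q := Hps u (-1/2) Hu ltac:(lra)).
    assert (Rabs (u - -1/2) <= 1) by (apply Rabs_le; lra).
    pose proof (Rabs_triang_inv (ps u) (ps (-1/2))). unfold Bps. nra. }
  set (k := fun p => Derive H p ^ 3).
  set (L2 := 3 * (B1 ^ 2 * B2)).
  assert (Hk : forall u v, -1 <= u <= 0 -> -1 <= v <= 0 -> Rabs (k u - k v) <= L2 * Rabs (u - v)).
  { apply (lip_cl k (fun p => INR 3 * Derive (Derive H) p * Derive H p ^ 2)).
    - intros x Hx. unfold k. apply (is_derive_pow (Derive H) 3 x). apply Derive_correct. apply (h_Hp_d _ _ HY).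
    - intros x Hx. rewrite !Rabs_mult. simpl INR. rewrite Rabs_right by lra.
      unfold L2. rewrite <- RPow_abs.
      assert (Rabs (Derive H x) ^ 2 <= B1 ^ 2).
      { apply pow_incr. split. apply Rabs_pos. apply HB1; lra. }
      assert (Rabs (Derive (Derive H) x) <= B2) by (apply HB2; lra).
      assert (0 <= Rabs (Derive (Derive H) x)) by apply Rabs_pos.
      assert (0 <= Rabs (Derive H x) ^ 2) by (apply pow_le; apply Rabs_pos).
      replace (1+1+1) with 3 by ring. nra.
    - intros x Hx. apply cont_cl; auto. apply cont_of_ex_derive. unfold k.
      apply ex_derive_pow. apply (h_Hp_d _ _ HY). }
  assert (HBk : forall u, -1 <= u <= 0 -> Rabs (k u) <= B1 ^ 3).
  { intros u Hu. unfold k. rewrite <- RPow_abs. apply pow_incr. split. apply Rabs_pos. auto. }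
  assert (Hfk : forall u, -1 < u < 0 -> Derive f u = k u * ps u).
  { intros u Hu. unfold k, ps. assert (0 < Derive H u) by (apply (h_Hp_pos _ _ HY); lra).
    field. lra. }
  exists (B1 ^ 3 * L1 + Bps * L2).
  apply deriv_lip_closed; auto.
  intros x z Hx Hz. rewrite !Hfk by auto.
  replace (k x * ps x - k z * ps z) with (k x * (ps x - ps z) + ps z * (k x - k z)) by ring.
  eapply Rle_trans. apply Rabs_triang. rewrite !Rabs_mult.
  assert (A1 := HBk x ltac:(lra)). assert (A2 := Hps x z Hx Hz).
  assert (A3 := HBps z Hz). assert (A4 := Hk x z ltac:(lra) ltac:(lra)).
  pose proof (Rabs_pos (k x)). pose proof (Rabs_pos (ps z)).
  pose proof (Rabs_pos (ps x - ps z)). pose proof (Rabs_pos (k x - k z)). pose proof (Rabs_pos (x - z)).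
  apply Rle_trans with (B1 ^ 3 * (L1 * Rabs (x - z)) + Bps * (L2 * Rabs (x - z))).
  apply Rplus_le_compat; apply Rmult_le_compat; auto.
  lra.
Qed.

Record hypw (w : R -> R -> R) : Prop := {
  hw_d : forall l q p, (length l < 3)%nat ->
     ex_derive (fun q' => pd l w q' p) q /\ ex_derive (fun p' => pd l w q p') p;
  hw_c : forall l q p, (length l <= 3)%nat -> in_Rbar q p ->
     continuous (fun z : R * R => pd l w (fst z) (snd z)) (q, p);
  hw_decay : forall l, (length l <= 2)%nat -> forall eps, 0 < eps -> exists M, forall q p,
     M <= Rabs q -> in_Rbar q p -> Rabs (pd l w q p) < eps;
  hw_B : forall q, w q (-1) = 0 }.

Lemma cont2_p (F : R -> R -> R) q p :
  continuous (fun z : R * R => F (fst z) (snd z)) (q, p) -> continuous (fun v => F q v) p.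
Proof.
  intros Hc. apply (continuous_comp_2 (fun _ : R => q) (fun v : R => v) F).
  apply continuous_const. apply continuous_id. exact Hc.
Qed.

Lemma cont2_q (F : R -> R -> R) q p :
  continuous (fun z : R * R => F (fst z) (snd z)) (q, p) -> continuous (fun u => F u p) q.
Proof.
  intros Hc. apply (continuous_comp_2 (fun u : R => u) (fun _ : R => p) F).
  apply continuous_id. apply continuous_const. exact Hc.
Qed.

Lemma cont2_2d (F : R -> R -> R) q p :
  continuous (fun z : R * R => F (fst z) (snd z)) (q, p) -> continuity_2d_pt F q p.
Proof. intros Hc. apply continuity_2d_pt_filterlim. exact Hc. Qed.

Lemma c2d_cont (F : R -> R -> R) q p :
  continuity_2d_pt F q p -> continuous (fun z : R * R => F (fst z) (snd z)) (q, p).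
Proof. intros Hc. apply continuity_2d_pt_filterlim in Hc. exact Hc. Qed.

Lemma c1d_2d_p (f : R -> R) q p : continuous f p -> continuity_2d_pt (fun _ v => f v) q p.
Proof.
  intros Hc. apply (continuity_1d_2d_pt_comp f (fun _ v => v)).
  apply cpt_of_cont; auto. apply continuity_2d_pt_id2.
Qed.

Lemma c2d_p (F : R -> R -> R) q p : continuity_2d_pt F q p -> continuous (fun v => F q v) p.
Proof. intros; apply cont2_p, c2d_cont; auto. Qed.

Lemma c2d_q (F : R -> R -> R) q p : continuity_2d_pt F q p -> continuous (fun u => F u p) q.
Proof. intros; apply cont2_q, c2d_cont; auto. Qed.

Lemma is_derive_cst (c x : R) : is_derive (fun _ => c) x 0.
Proof. apply is_derive_Reals, derivable_pt_lim_const. Qed.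

Lemma dq_h (H : R -> R) w q p : ex_derive (fun q' => w q' p) q ->
  dq (fun q p => H p + w q p) q p = pd (true :: nil) w q p.
Proof.
  intros Hw. change (pd (true :: nil) w q p) with (Derive (fun q' => w q' p) q).
  unfold dq.
  assert (E : is_derive (fun q' => H p + w q' p) q (0 + Derive (fun q' => w q' p) q)).
  { apply (is_derive_plus (fun _ : R => H p) (fun q' => w q' p)).
    apply is_derive_cst. apply Derive_correct; auto. }
  rewrite Rplus_0_l in E. apply is_derive_unique in E. exact E.
Qed.

Lemma dp_h (H : R -> R) w q p : ex_derive H p -> ex_derive (fun p' => w q p') p ->
  dp (fun q p => H p + w q p) q p = Derive H p + pd (false :: nil) w q p.
Proof.
  intros HH Hw. change (pd (false :: nil) w q p) with (Derive (fun p' => w q p') p).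
  unfold dp. apply is_derive_unique.
  apply (is_derive_plus H (fun p' => w q p')); apply Derive_correct; auto.
Qed.

Definition hpf (H : R -> R) w q p := Derive H p + pd (false :: nil) w q p.
Definition hqf (w : R -> R -> R) q p := pd (true :: nil) w q p.
Definition hh (H : R -> R) (w : R -> R -> R) := fun q p => H p + w q p.

Lemma pdc2 w l q p : hypw w -> (length l <= 3)%nat -> in_Rbar q p -> continuity_2d_pt (pd l w) q p.
Proof. intros HW Hl Hr. apply cont2_2d. apply (hw_c _ HW); auto. Qed.

Lemma hp_c2d rho H w q p : hyp1 rho H -> hypw w -> -1 <= p <= 0 ->
  continuity_2d_pt (hpf H w) q p.
Proof.
  intros HY HW Hp. unfold hpf.
  apply continuity_2d_pt_plus.
  - apply c1d_2d_p. apply cont_of_ex_derive. apply (h_Hp_d _ _ HY).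
  - apply pdc2; auto.
Qed.

Lemma closed_lb (g : R -> R) (a b x d : R) : a < b -> a <= x <= b -> continuous g x ->
  (forall y, a < y < b -> d <= g y) -> d <= g x.
Proof.
  intros Hab Hx Hc Hy.
  destruct (Rle_lt_dec d (g x)) as [|Hlt]; auto. exfalso.
  assert (He : 0 < d - g x) by lra.
  destruct (proj1 (filterlim_locally g (g x)) Hc (mkposreal _ He)) as [e He2].
  set (e' := Rmin (e / 2) ((b - a) / 4)).
  assert (0 < e) by apply cond_pos.
  assert (He' : 0 < e') by (apply Rmin_pos; lra).
  assert (e' <= e / 2) by apply Rmin_l. assert (e' <= (b - a) / 4) by apply Rmin_r.
  set (y := if Rlt_dec x ((a + b) / 2) then x + e' else x - e').
  assert (Hyab : a < y < b).
  { unfold y. destruct (Rlt_dec x ((a+b)/2)); lra. }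
  assert (Hb : ball x e y).
  { apply ball_R. unfold y. destruct (Rlt_dec x ((a+b)/2)).
    rewrite Rabs_right; lra. rewrite Rabs_left; lra. }
  specialize (He2 y Hb).
  assert (Q : Rabs (g y - g x) < d - g x) by exact He2.
  specialize (Hy y Hyab). apply Rabs_def2 in Q. destruct Q. lra.
Qed.

Lemma hp_lb rho H w (delta : R) q p : hyp1 rho H -> hypw w ->
  (forall q p, in_R q p -> delta <= Derive H p + dp w q p) -> -1 <= p <= 0 ->
  delta <= hpf H w q p.
Proof.
  intros HY HW Hd Hp.
  apply (closed_lb (fun v => hpf H w q v) (-1) 0 p delta); try lra.
  - apply c2d_p. apply (hp_c2d rho); auto.
  - intros y Hy. apply Hd. unfold in_R. lra.
Qed.

Lemma dqh_eq H w q p : hypw w -> dq (hh H w) q p = hqf w q p.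
Proof.
  intros HW. unfold hh. apply dq_h.
  apply (proj1 ((hw_d _ HW) nil q p ltac:(simpl; lia))).
Qed.

Lemma dph_eq rho H w q p : hyp1 rho H -> hypw w -> dp (hh H w) q p = hpf H w q p.
Proof.
  intros HY HW. unfold hh, hpf. apply dp_h. apply (h_H_d _ _ HY).
  apply (proj2 ((hw_d _ HW) nil q p ltac:(simpl; lia))).
Qed.

Definition D2 (H : R -> R) w u v := Derive (fun z => dq (hh H w) z v / dp (hh H w) z v) u.

Lemma D2_formula rho H w u v : hyp1 rho H -> hypw w -> hpf H w u v <> 0 ->
  D2 H w u v = (pd (true :: true :: nil) w u v * hpf H w u v
                - hqf w u v * pd (true :: false :: nil) w u v) / hpf H w u v ^ 2.
Proof.
  intros HY HW Hn. unfold D2.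
  rewrite (Derive_ext _ (fun z => hqf w z v / hpf H w z v)).
  2:{ intros z. rewrite dqh_eq, (dph_eq rho); auto. }
  assert (E1 : is_derive (fun z => hqf w z v) u (pd (true :: true :: nil) w u v)).
  { apply Derive_correct. apply (proj1 ((hw_d _ HW) (true :: nil) u v ltac:(simpl; lia))). }
  assert (E2 : is_derive (fun z => hpf H w z v) u (0 + pd (true :: false :: nil) w u v)).
  { unfold hpf. apply (is_derive_plus (fun _ => Derive H v) (fun z => pd (false :: nil) w z v)).
    apply is_derive_cst. apply Derive_correct.
    apply (proj1 ((hw_d _ HW) (false :: nil) u v ltac:(simpl; lia))). }
  rewrite Rplus_0_l in E2.
  apply is_derive_unique. apply (is_derive_div (fun z => hqf w z v) (fun z => hpf H w z v)); auto.
Qed.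

Lemma D2_c2d rho H w q t : hyp1 rho H -> hypw w -> -1 <= t <= 0 -> hpf H w q t <> 0 ->
  continuity_2d_pt (D2 H w) q t.
Proof.
  intros HY HW Ht Hn.
  assert (Hc := hp_c2d rho H w q t HY HW Ht).
  assert (Hr : in_Rbar q t) by (unfold in_Rbar; auto).
  apply continuity_2d_pt_ext_loc with
    (f := fun u v => (pd (true :: true :: nil) w u v * hpf H w u v
                - hqf w u v * pd (true :: false :: nil) w u v) * / (hpf H w u v ^ 2)).
  { destruct (continuity_2d_pt_neq_0 _ _ _ Hc Hn) as [e He].
    exists e. intros u v Hu Hv. rewrite (D2_formula rho); auto. }
  apply continuity_2d_pt_mult.
  - apply continuity_2d_pt_minus; apply continuity_2d_pt_mult; auto; unfold hqf; apply pdc2; auto.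
  - apply continuity_2d_pt_inv. 
    apply continuity_2d_pt_ext with (f := fun u v => hpf H w u v * (hpf H w u v * 1)).
    { intros; simpl; ring. }
    apply continuity_2d_pt_mult; auto. apply continuity_2d_pt_mult; auto. apply continuity_2d_pt_const.
    apply pow_nonzero; auto.
Qed.

Definition fG (Ph H : R -> R) w u t := Ph t * (dq (hh H w) u t / dp (hh H w) u t).

Lemma hq_cont_p w q t : hypw w -> -1 <= t <= 0 -> continuous (fun v => hqf w q v) t.
Proof. intros HW Ht. apply c2d_p. unfold hqf. apply pdc2; auto. Qed.

Lemma hp_cont_p rho H w q t : hyp1 rho H -> hypw w -> -1 <= t <= 0 -> continuous (fun v => hpf H w q v) t.
Proof. intros HY HW Ht. apply c2d_p. apply (hp_c2d rho); auto. Qed.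

Lemma G_deriv rho H w (Ph : R -> R) delta q : hyp1 rho H -> hypw w -> 0 < delta ->
  (forall q p, -1 <= p <= 0 -> delta <= hpf H w q p) ->
  (forall x, ex_derive Ph x) ->
  is_derive (fun u => RInt (fun t => fG Ph H w u t) (-1) 0) q
    (RInt (fun t => Ph t * D2 H w q t) (-1) 0).
Proof.
  intros HY HW Hdel Hlb HPh.
  assert (Hnz : forall u t, -1 <= t <= 0 -> hpf H w u t <> 0).
  { intros u t Ht. specialize (Hlb u t Ht). lra. }
  assert (Hmm : forall t, Rmin (-1) 0 <= t <= Rmax (-1) 0 -> -1 <= t <= 0).
  { intros t. rewrite Rmin_left, Rmax_right; lra. }
  assert (Hf : forall u t, fG Ph H w u t = Ph t * (hqf w u t / hpf H w u t)).
  { intros u t. unfold fG. rewrite dqh_eq, (dph_eq rho); auto. }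
  rewrite <- (RInt_ext (fun t => Derive (fun u => fG Ph H w u t) q)).
  2:{ intros t Ht. unfold fG. rewrite Derive_scal. reflexivity. }
  apply (is_derive_RInt_param (fun u t => fG Ph H w u t)).
  - apply filter_forall. intros x0 t Ht. apply Hmm in Ht.
    apply (ex_derive_ext (fun u => Ph t * (hqf w u t / hpf H w u t))).
    { intros; rewrite Hf; auto. }
    apply ex_derive_scal. apply ex_derive_div; auto.
    + apply (proj1 ((hw_d _ HW) (true :: nil) x0 t ltac:(simpl; lia))).
    + unfold hpf. apply (ex_derive_plus (fun _ => Derive H t) (fun u => pd (false :: nil) w u t)).
      apply ex_derive_const. apply (proj1 ((hw_d _ HW) (false :: nil) x0 t ltac:(simpl; lia))).
  - intros t Ht. apply Hmm in Ht.
    apply continuity_2d_pt_ext with (f := fun u v => Ph v * D2 H w u v).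
    { intros u v. unfold fG. rewrite Derive_scal. reflexivity. }
    apply continuity_2d_pt_mult.
    + apply c1d_2d_p. apply cont_of_ex_derive; auto.
    + apply (D2_c2d rho); auto.
  - apply filter_forall. intros y. apply (@ex_RInt_continuous R_CompleteNormedModule).
    intros z Hz. apply Hmm in Hz.
    apply (continuous_ext (fun t => Ph t * (hqf w y t / hpf H w y t))).
    { intros; rewrite Hf; auto. }
    apply cmul. apply cont_of_ex_derive; auto.
    apply cdiv. apply hq_cont_p; auto. apply (hp_cont_p rho); auto. auto.
Qed.

Lemma G_decay rho H w (Ph : R -> R) delta : hyp1 rho H -> hypw w -> 0 < delta ->
  (forall q p, -1 <= p <= 0 -> delta <= hpf H w q p) ->
  (forall x, ex_derive Ph x) ->
  forall eps, 0 < eps -> exists M, forall q, M <= Rabs q ->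
    Rabs (RInt (fun t => fG Ph H w q t) (-1) 0) <= eps.
Proof.
  intros HY HW Hdel Hlb HPh eps Heps.
  assert (Hnz : forall u t, -1 <= t <= 0 -> hpf H w u t <> 0).
  { intros u t Ht. specialize (Hlb u t Ht). lra. }
  assert (Hf : forall u t, fG Ph H w u t = Ph t * (hqf w u t / hpf H w u t)).
  { intros u t. unfold fG. rewrite dqh_eq, (dph_eq rho); auto. }
  destruct (bound_cont Ph (-1) 0) as [B HB]; [lra| intros; apply cont_of_ex_derive; auto|].
  assert (HB0 : 0 <= B) by (eapply Rle_trans; [apply Rabs_pos| apply (HB 0); lra]).
  set (eta := eps * delta / (B + 1)).
  assert (Heta : 0 < eta) by (unfold eta; apply Rdiv_lt_0_compat; [nra|lra]).
  destruct ((hw_decay _ HW) (true :: nil) ltac:(simpl; lia) eta Heta) as [M HM].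
  exists M. intros q Hq.
  replace eps with ((0 - -1) * eps) by ring.
  apply abs_RInt_le_const. lra.
  - apply (@ex_RInt_continuous R_CompleteNormedModule).
    intros z Hz. rewrite Rmin_left, Rmax_right in Hz by lra.
    apply (continuous_ext (fun t => Ph t * (hqf w q t / hpf H w q t))).
    { intros; rewrite Hf; auto. }
    apply cmul. apply cont_of_ex_derive; auto.
    apply cdiv. apply hq_cont_p; auto. apply (hp_cont_p rho); auto. auto.
  - intros t Ht. rewrite Hf. rewrite Rabs_mult. unfold Rdiv. rewrite Rabs_mult.
    assert (Hl := Hlb q t Ht).
    rewrite Rabs_inv, (Rabs_right (hpf H w q t)) by lra.
    assert (A1 := HB t Ht). assert (A2 : Rabs (hqf w q t) < eta) by (apply HM; auto; unfold in_Rbar; lra).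
    assert (A3 : / hpf H w q t <= / delta) by (apply Rinv_le_contravar; lra).
    assert (0 < / hpf H w q t) by (apply Rinv_0_lt_compat; lra).
    apply Rle_trans with (B * (eta * / delta)).
    { pose proof (Rabs_pos (hqf w q t)). pose proof (Rabs_pos (Ph t)).
      apply Rmult_le_compat; auto. apply Rmult_le_pos; lra.
      apply Rmult_le_compat; lra. }
    unfold eta. apply Rle_trans with (eps * (B / (B+1))).
    { right. field. lra. }
    assert (B / (B + 1) <= 1). { apply Rmult_le_reg_r with (B+1). lra. field_simplify; lra. }
    nra.
Qed.

Definition afun (H : R -> R) w q t :=
  - (1 + hqf w q t ^ 2) / (2 * hpf H w q t ^ 2) + 1 / (2 * Derive H t ^ 2).
Definition Nf (H : R -> R) w q t := - afun H w q t + pd (false :: nil) w q t / Derive H t ^ 3.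

Lemma afun_ex_derive rho H w q t : hyp1 rho H -> hypw w -> hpf H w q t <> 0 -> Derive H t <> 0 ->
  ex_derive (fun v => afun H w q v) t.
Proof.
  intros HY HW Hn HH. unfold afun.
  assert (E1 : ex_derive (fun v => hqf w q v) t).
  { apply (proj2 ((hw_d _ HW) (true :: nil) q t ltac:(simpl; lia))). }
  assert (E2 : ex_derive (fun v => hpf H w q v) t).
  { unfold hpf. apply (ex_derive_plus (Derive H) (fun v => pd (false :: nil) w q v)).
    apply (h_Hp_d _ _ HY). apply (proj2 ((hw_d _ HW) (false :: nil) q t ltac:(simpl; lia))). }
  apply (ex_derive_plus (fun v => - (1 + hqf w q v ^ 2) / (2 * hpf H w q v ^ 2)) (fun v => 1 / (2 * Derive H v ^ 2))).
  - apply (ex_derive_div (fun v => - (1 + hqf w q v ^ 2)) (fun v => 2 * hpf H w q v ^ 2)).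
    + apply (ex_derive_opp (fun v => 1 + hqf w q v ^ 2)).
      apply (ex_derive_plus (fun _ => 1) (fun v => hqf w q v ^ 2)). apply ex_derive_const.
      apply ex_derive_pow; auto.
    + apply ex_derive_scal. apply ex_derive_pow; auto.
    + apply Rmult_integral_contrapositive_currified. lra. apply pow_nonzero; auto.
  - apply (ex_derive_div (fun _ => 1) (fun v => 2 * Derive H v ^ 2)).
    + apply ex_derive_const.
    + apply ex_derive_scal. apply ex_derive_pow. apply (h_Hp_d _ _ HY).
    + apply Rmult_integral_contrapositive_currified. lra. apply pow_nonzero; auto.
Qed.

Lemma afun_cont rho H w q t : hyp1 rho H -> hypw w -> -1 <= t <= 0 -> hpf H w q t <> 0 -> Derive H t <> 0 ->
  continuous (fun v => afun H w q v) t.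
Proof.
  intros HY HW Ht Hn HH. unfold afun.
  assert (HcH : continuous (Derive H) t) by (apply cont_of_ex_derive; apply (h_Hp_d _ _ HY)).
  apply cplus.
  - apply cdiv. apply copp. apply cplus. apply ccst. apply cpow. apply hq_cont_p; auto.
    apply cmul. apply ccst. apply cpow. apply (hp_cont_p rho); auto.
    apply Rmult_integral_contrapositive_currified. lra. apply pow_nonzero; auto.
  - apply cdiv. apply ccst. apply cmul. apply ccst. apply cpow. auto.
    apply Rmult_integral_contrapositive_currified. lra. apply pow_nonzero; auto.
Qed.

Lemma cl_c (f : R -> R) x : -1 <= x <= 0 -> continuous f x -> continuous (fun y => f (cl (-1) 0 y)) x.
Proof. intros; apply cont_cl; auto. Qed.

Lemma ident rho H w (Ph : R -> R) mu delta q : hyp1 rho H -> hypw w -> 0 < delta ->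
  (forall q p, -1 <= p <= 0 -> delta <= hpf H w q p) ->
  (forall x, ex_derive Ph x) ->
  (forall p, -1 < p < 0 -> ex_derive (psi H Ph) p /\ Derive (psi H Ph) p - mu * Derive rho p * Ph p = 0) ->
  Ph (-1) = 0 ->
  (exists L, forall x y, -1 <= x <= 0 -> -1 <= y <= 0 ->
     Rabs (Derive Ph x - Derive Ph y) <= L * Rabs (x - y)) ->
  (forall p, -1 < p < 0 -> Derive (fun v => afun H w q v) p + D2 H w q p - mu * Derive rho p * w q p = 0) ->
  afun H w q 0 = mu * rho 0 * w q 0 ->
  (forall x, -1 <= x <= 0 -> continuous (fun y => Derive Ph (cl (-1) 0 y) * Nf H w q (cl (-1) 0 y)) x) /\
  ex_RInt (fun t => Derive Ph t * Nf H w q t) (-1) 0 /\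
  RInt (fun t => Ph t * D2 H w q t) (-1) 0 =
    - (- Derive Ph 0 / Derive H 0 ^ 3 + mu * rho 0 * Ph 0) * w q 0
    - RInt (fun t => Derive Ph t * Nf H w q t) (-1) 0.
Proof.
  intros HY HW Hdel Hlb HPh Hode HPh0 [L HL] HPDE HBC.
  assert (Hnz : forall t, -1 <= t <= 0 -> hpf H w q t <> 0).
  { intros t Ht. specialize (Hlb q t Ht). lra. }
  assert (HHz : forall t, -1 <= t <= 0 -> Derive H t <> 0).
  { intros t Ht. specialize (h_Hp_pos _ _ HY t Ht). lra. }
  assert (HdPc : forall x, continuous (fun y => Derive Ph (cl (-1) 0 y)) x).
  { apply (lip_cont_cl (Derive Ph) (-1) 0 L); auto; lra. }
  assert (Hwc : forall t, -1 <= t <= 0 -> continuous (fun v => w q v) t).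
  { intros t Ht. apply (c2d_p (pd nil w)). apply pdc2; auto. }
  assert (Hwpc : forall t, -1 <= t <= 0 -> continuous (fun v => pd (false :: nil) w q v) t).
  { intros t Ht. apply c2d_p. apply pdc2; auto. }
  assert (HPc : forall t, continuous Ph t) by (intros; apply cont_of_ex_derive; auto).
  assert (HHc : forall t, continuous (Derive H) t) by (intros; apply cont_of_ex_derive; apply (h_Hp_d _ _ HY)).
  assert (Hrc : forall t, -1 <= t <= 0 -> continuous (Derive rho) t) by (apply (h_rhop_c _ _ HY)).
  assert (HD2c : forall t, -1 <= t <= 0 -> continuous (fun v => D2 H w q v) t).
  { intros t Ht. apply c2d_p. apply (D2_c2d rho); auto. }
  assert (Hac : forall t, -1 <= t <= 0 -> continuous (fun v => afun H w q v) t).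
  { intros t Ht. apply (afun_cont rho); auto. }
  assert (Hpsc : forall t, -1 <= t <= 0 -> continuous (fun y => psi H Ph (cl (-1) 0 y)) t).
  { intros t Ht. unfold psi.
    apply (cdiv (fun y => Derive Ph (cl (-1) 0 y)) (fun y => Derive H (cl (-1) 0 y) ^ 3)).
    apply HdPc. apply cpow. apply cl_c; auto. rewrite cl_id by auto. apply pow_nonzero; auto. }
  set (c := fun t => mu * Derive rho t * w q t - D2 H w q t).
  set (g1 := fun t => Derive Ph t * afun H w q t + Ph t * c t).
  set (g2 := fun t => pd (false :: nil) w q t * psi H Ph t + w q t * (mu * Derive rho t * Ph t)).
  assert (I1 : is_RInt g1 (-1) 0 (Ph 0 * afun H w q 0 - Ph (-1) * afun H w q (-1))).
  { apply (FTC_cl (-1) 0 (fun t => Ph t * afun H w q t) g1). lra.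
    - intros x Hx. unfold g1.
      replace (c x) with (Derive (fun v => afun H w q v) x).
      2:{ unfold c. specialize (HPDE x Hx). lra. }
      apply (is_derive_mult Ph (fun v => afun H w q v)). apply Derive_correct; auto.
      apply Derive_correct. apply (afun_ex_derive rho); auto; try apply Hnz; try apply HHz; lra.
      intros; apply Rmult_comm.
    - intros x Hx. apply (cl_c (fun t => Ph t * afun H w q t)); auto. apply cmul; auto.
    - intros x Hx. unfold g1, c.
      apply (cplus (fun y => Derive Ph (cl (-1) 0 y) * afun H w q (cl (-1) 0 y))
                   (fun y => Ph (cl (-1) 0 y) * (mu * Derive rho (cl (-1) 0 y) * w q (cl (-1) 0 y) - D2 H w q (cl (-1) 0 y)))).
      + apply cmul. apply HdPc. apply (cl_c (fun v => afun H w q v)); auto.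
      + apply (cl_c (fun y => Ph y * (mu * Derive rho y * w q y - D2 H w q y))); auto.
        apply cmul; auto. apply cminus; auto. apply cmul; auto. apply cmul; auto. apply ccst. }
  assert (I2 : is_RInt g2 (-1) 0 (w q 0 * psi H Ph 0 - w q (-1) * psi H Ph (-1))).
  { apply (FTC_cl (-1) 0 (fun t => w q t * psi H Ph t) g2). lra.
    - intros x Hx. unfold g2. destruct (Hode x Hx) as [Hex Heq].
      replace (mu * Derive rho x * Ph x) with (Derive (psi H Ph) x) by lra.
      apply (is_derive_mult (fun v => w q v) (psi H Ph)).
      apply Derive_correct. apply (proj2 ((hw_d _ HW) nil q x ltac:(simpl; lia))).
      apply Derive_correct; auto.
      intros; apply Rmult_comm.
    - intros x Hx. apply (cmul (fun y => w q (cl (-1) 0 y)) (fun y => psi H Ph (cl (-1) 0 y))).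
      apply (cl_c (fun v => w q v)); auto. auto.
    - intros x Hx. unfold g2.
      apply (cplus (fun y => pd (false :: nil) w q (cl (-1) 0 y) * psi H Ph (cl (-1) 0 y))
                   (fun y => w q (cl (-1) 0 y) * (mu * Derive rho (cl (-1) 0 y) * Ph (cl (-1) 0 y)))).
      + apply cmul; auto. apply (cl_c (fun v => pd (false :: nil) w q v)); auto.
      + apply (cl_c (fun y => w q y * (mu * Derive rho y * Ph y))); auto.
        apply cmul; auto. apply cmul; auto. apply cmul; auto. apply ccst. }
  assert (HNc : forall x, -1 <= x <= 0 -> continuous (fun y => Derive Ph (cl (-1) 0 y) * Nf H w q (cl (-1) 0 y)) x).
  { intros x Hx. apply cmul. apply HdPc. apply (cl_c (fun v => Nf H w q v)); auto.
    unfold Nf. apply cplus. apply copp; auto. apply cdiv; auto. apply cpow; auto.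
    apply pow_nonzero; auto. }
  assert (EN : ex_RInt (fun t => Derive Ph t * Nf H w q t) (-1) 0).
  { apply ex_RInt_ext with (fun y => Derive Ph (cl (-1) 0 y) * Nf H w q (cl (-1) 0 y)).
    { intros x Hx. rewrite Rmin_left, Rmax_right in Hx by lra. rewrite cl_id; lra. }
    apply (@ex_RInt_continuous R_CompleteNormedModule). intros z Hz.
    apply (cont_cl_all (-1) 0 (fun t => Derive Ph t * Nf H w q t)); [lra|exact HNc]. }
  split; auto. split; auto.
  assert (I3 : is_RInt (fun t => g2 t - g1 t - Derive Ph t * Nf H w q t) (-1) 0
     ((w q 0 * psi H Ph 0 - w q (-1) * psi H Ph (-1)) - (Ph 0 * afun H w q 0 - Ph (-1) * afun H w q (-1))
      - RInt (fun t => Derive Ph t * Nf H w q t) (-1) 0)).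
  { apply (is_RInt_minus (V:=R_NormedModule)). apply (is_RInt_minus (V:=R_NormedModule)); auto.
    apply (@RInt_correct R_CompleteNormedModule). auto. }
  replace (- (- Derive Ph 0 / Derive H 0 ^ 3 + mu * rho 0 * Ph 0) * w q 0 -
      RInt (fun t : R => Derive Ph t * Nf H w q t) (-1) 0) with
      ((w q 0 * psi H Ph 0 - w q (-1) * psi H Ph (-1)) - (Ph 0 * afun H w q 0 - Ph (-1) * afun H w q (-1))
      - RInt (fun t => Derive Ph t * Nf H w q t) (-1) 0).
  2:{ rewrite HBC, HPh0, (hw_B _ HW). unfold psi. field. split; apply HHz; lra. }
  apply is_RInt_unique.
  eapply is_RInt_ext; [| exact I3].
  intros x Hx. rewrite Rmin_left, Rmax_right in Hx by lra.
  unfold g1, g2, c, Nf, psi. cbv beta.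
  match goal with |- ?a = ?b => assert (E : (a : R) = b) by (field; apply HHz; lra); exact E end.
Qed.

Lemma cont_of_cl (k : R -> R) a b x : a < x < b -> continuous (fun y => k (cl a b y)) x -> continuous k x.
Proof.
  intros Hx Hc. apply (continuous_ext_loc _ (fun y => k (cl a b y))); auto.
  eapply filter_imp; [|apply (loc_open a b x Hx)]. intros y Hy. simpl. rewrite cl_id; lra.
Qed.

Lemma zero_int (k : R -> R) a b : a < b ->
  (forall x, a <= x <= b -> continuous (fun y => k (cl a b y)) x) ->
  (forall x, a < x < b -> 0 <= k x) ->
  ex_RInt k a b -> RInt k a b = 0 -> forall t, a < t < b -> k t = 0.
Proof.
  intros Hab Hc Hnn Hex Hz t0 Ht0.
  destruct (Req_dec (k t0) 0) as [|Hne]; auto. exfalso.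
  assert (Hp : 0 < k t0) by (specialize (Hnn t0 Ht0); lra).
  assert (Hk0 : continuous k t0) by (apply (cont_of_cl k a b); auto; apply Hc; lra).
  assert (Hh : 0 < k t0 / 2) by lra.
  destruct (proj1 (filterlim_locally k (k t0)) Hk0 (mkposreal _ Hh)) as [e He].
  assert (0 < e) by apply cond_pos.
  set (e' := Rmin (e / 2) (Rmin ((t0 - a) / 2) ((b - t0) / 2))).
  assert (He1 : e' <= e / 2) by apply Rmin_l.
  assert (He2 : e' <= (t0 - a) / 2) by (eapply Rle_trans; [apply Rmin_r|apply Rmin_l]).
  assert (He3 : e' <= (b - t0) / 2) by (eapply Rle_trans; [apply Rmin_r|apply Rmin_r]).
  assert (He0 : 0 < e') by (apply Rmin_pos; [lra| apply Rmin_pos; lra]).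
  set (u := t0 - e'). set (v := t0 + e').
  assert (Hpos : 0 < RInt k u v).
  { apply RInt_gt_0. unfold u, v; lra.
    - intros x Hx. assert (Hb : ball t0 e x).
      { apply ball_R. unfold u, v in Hx. apply Rabs_def1; lra. }
      specialize (He x Hb). assert (Q : Rabs (k x - k t0) < k t0 / 2) by exact He.
      apply Rabs_def2 in Q. lra.
    - intros x Hx. apply (cont_of_cl k a b). unfold u, v in Hx; lra. apply Hc. unfold u, v in Hx; lra. }
  assert (E1 : ex_RInt k a v) by (apply (ex_RInt_Chasles_1 k a v b); auto; unfold v; lra).
  assert (E2 : ex_RInt k a u) by (apply (ex_RInt_Chasles_1 k a u v); auto; unfold u, v; lra).
  assert (E3 : ex_RInt k u v) by (apply (ex_RInt_Chasles_2 k a u v); auto; unfold u, v; lra).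
  assert (E4 : ex_RInt k v b) by (apply (ex_RInt_Chasles_2 k a v b); auto; unfold v; lra).
  assert (C1 := RInt_Chasles k a u v E2 E3).
  assert (C2 := RInt_Chasles k a v b E1 E4).
  assert (N1 : 0 <= RInt k a u).
  { apply RInt_ge_0; auto. unfold u; lra. intros; apply Hnn; unfold u in *; lra. }
  assert (N2 : 0 <= RInt k v b).
  { apply RInt_ge_0; auto. unfold v; lra. intros; apply Hnn; unfold v in *; lra. }
  unfold plus in C1, C2. simpl in C1, C2. lra.
Qed.

Lemma Nf_ge H w q t : 0 < hpf H w q t -> 0 < Derive H t ->
  hqf w q t ^ 2 / (2 * hpf H w q t ^ 2) <= Nf H w q t.
Proof.
  intros Hx Hy. unfold Nf, afun.
  replace (pd (false :: nil) w q t) with (hpf H w q t - Derive H t) by (unfold hpf; ring).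
  set (x := hpf H w q t) in *. set (y := Derive H t) in *. set (s := hqf w q t).
  assert (E : - (- (1 + s ^ 2) / (2 * x ^ 2) + 1 / (2 * y ^ 2)) + (x - y) / y ^ 3 - s ^ 2 / (2 * x ^ 2)
              = (x - y) ^ 2 * (2 * x + y) / (2 * x ^ 2 * y ^ 3)) by (field; lra).
  assert (0 <= (x - y) ^ 2 * (2 * x + y) / (2 * x ^ 2 * y ^ 3)).
  { apply Rdiv_le_0_compat. apply Rmult_le_pos. apply pow2_ge_0. lra.
    apply Rmult_lt_0_compat. apply Rmult_lt_0_compat. lra. apply pow_lt; lra. apply pow_lt; lra. }
  lra.
Qed.

Lemma Nf_nonneg H w q t : 0 < hpf H w q t -> 0 < Derive H t -> 0 <= Nf H w q t.
Proof.
  intros. eapply Rle_trans; [|apply Nf_ge; auto].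
  apply Rdiv_le_0_compat. apply pow2_ge_0. apply Rmult_lt_0_compat. lra. apply pow_lt; lra.
Qed.

Lemma cl_limit_eq (g : R -> R) a b x c : a < b -> a <= x <= b -> continuous g x ->
  (forall y, a < y < b -> g y = c) -> g x = c.
Proof.
  intros Hab Hx Hc Hy.
  assert (c <= g x) by (apply (closed_lb g a b x c); auto; intros; rewrite Hy; auto; lra).
  assert (- c <= - g x).
  { apply (closed_lb (fun y => - g y) a b x (- c)); auto. apply copp; auto.
    intros; rewrite Hy; auto; lra. }
  lra.
Qed.

Lemma phi_pos_deriv rho H (Ph : R -> R) mu : hyp1 rho H -> 0 < mu ->
  (forall x, ex_derive Ph x) ->
  (forall p, -1 < p < 0 -> ex_derive (psi H Ph) p /\ Derive (psi H Ph) p - mu * Derive rho p * Ph p = 0) ->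
  Ph (-1) = 0 -> Derive Ph (-1) = 1 ->
  (forall x, continuous (fun y => Derive Ph (cl (-1) 0 y)) x) ->
  (forall p, -1 <= p <= 0 -> 0 <= Derive Ph p) ->
  - Derive Ph 0 / Derive H 0 ^ 3 + mu * rho 0 * Ph 0 = 0 ->
  forall t, -1 <= t <= 0 -> 0 < Derive Ph t.
Proof.
  intros HY Hmu HPh Hode H0 H1 HdPc Hnn HA.
  assert (HPc : forall t, continuous Ph t) by (intros; apply cont_of_ex_derive; auto).
  assert (Hmono : forall u v, -1 <= u -> u <= v -> v <= 0 -> Ph u <= Ph v).
  { intros u v Hu Huv Hv.
    assert (- Ph v <= - Ph u).
    { apply (mono_cl (fun y => - Ph y) (fun y => - Derive Ph y) (-1) 0); auto.
      - intros x Hx. apply (is_derive_opp Ph). apply Derive_correct; auto.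
      - intros x Hx. specialize (Hnn x ltac:(lra)). lra.
      - intros x Hx. apply (cl_c (fun y => - Ph y)); auto. apply copp; auto. }
    lra. }
  assert (HPnn : forall t, -1 <= t <= 0 -> 0 <= Ph t).
  { intros t Ht. rewrite <- H0. apply Hmono; lra. }
  assert (HP0 : 0 < Ph 0).
  { destruct (Rlt_le_dec 0 (Ph 0)) as [|Hle]; auto. exfalso.
    assert (Hz : forall t, -1 <= t <= 0 -> Ph t = 0).
    { intros t Ht. assert (Ph t <= Ph 0) by (apply Hmono; lra). specialize (HPnn t Ht). lra. }
    assert (Hd0 : forall y, -1 < y < 0 -> Derive Ph (cl (-1) 0 y) = 0).
    { intros y Hy. rewrite cl_id by lra. apply is_derive_unique.
      apply (is_derive_ext_loc (fun _ => 0)). 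
      eapply filter_imp; [|apply (loc_open (-1) 0 y Hy)]. intros z Hz'. simpl. rewrite Hz; lra.
      apply is_derive_cst. }
    assert (Q := cl_limit_eq (fun y => Derive Ph (cl (-1) 0 y)) (-1) 0 (-1) 0 ltac:(lra) ltac:(lra) (HdPc (-1)) Hd0).
    simpl in Q. rewrite cl_id in Q by lra. lra. }
  assert (HH0 : 0 < Derive H 0) by (apply (h_Hp_pos _ _ HY); lra).
  assert (HD0 : 0 < Derive Ph 0).
  { assert (Derive Ph 0 = Derive H 0 ^ 3 * (mu * rho 0 * Ph 0)).
    { assert (E : Derive Ph 0 / Derive H 0 ^ 3 = mu * rho 0 * Ph 0) by lra.
      rewrite <- E. field. lra. }
    rewrite H2. apply Rmult_lt_0_compat. apply pow_lt; lra.
    apply Rmult_lt_0_compat; auto. apply Rmult_lt_0_compat; auto. apply (h_rho_pos _ _ HY); lra. }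
  intros t Ht. destruct (Req_dec t 0) as [->|Hne0]; auto.
  destruct (Req_dec t (-1)) as [->|Hne1]; [lra|].
  destruct (Rlt_le_dec 0 (Derive Ph t)) as [|Hle]; auto. exfalso.
  assert (Hzt : Derive Ph t = 0) by (specialize (Hnn t Ht); lra).
  assert (Hps_t : psi H Ph t = 0) by (unfold psi; rewrite Hzt; unfold Rdiv; ring).
  assert (Hzero : forall y, t < y < 0 -> Derive Ph (cl (-1) 0 y) = 0).
  { intros y Hy. rewrite cl_id by lra.
    assert (Hps : psi H Ph y <= psi H Ph t).
    { apply (mono_cl (psi H Ph) (fun p => mu * Derive rho p * Ph p) t y).
      - intros x Hx. destruct (Hode x ltac:(lra)) as [Hex Heq].
        replace (mu * Derive rho x * Ph x) with (Derive (psi H Ph) x) by lra.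
        apply Derive_correct; auto.
      - intros x Hx. assert (Derive rho x <= 0) by (apply (h_rhop_neg _ _ HY); lra).
        assert (0 <= Ph x) by (apply HPnn; lra).
        assert (0 <= mu * (- Derive rho x) * Ph x) by (apply Rmult_le_pos; [apply Rmult_le_pos|]; lra).
        lra.
      - intros x Hx. apply cont_cl; auto. apply cont_of_ex_derive.
        destruct (Hode x ltac:(lra)); auto.
      - lra.
      - lra.
      - lra. }
    rewrite Hps_t in Hps. unfold psi in Hps.
    assert (0 < Derive H y) by (apply (h_Hp_pos _ _ HY); lra).
    assert (0 < Derive H y ^ 3) by (apply pow_lt; lra).
    assert (Derive Ph y <= 0).
    { apply Rmult_le_reg_r with (/ Derive H y ^ 3). apply Rinv_0_lt_compat; auto.
      rewrite Rmult_0_l. exact Hps. }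
    specialize (Hnn y ltac:(lra)). lra. }
  assert (Q := cl_limit_eq (fun y => Derive Ph (cl (-1) 0 y)) t 0 0 0 ltac:(lra) ltac:(lra) (HdPc 0) Hzero).
  simpl in Q. rewrite cl_id in Q by lra. lra.
Qed.

Lemma mono_const (G dG : R -> R) : (forall q, is_derive G q (dG q)) -> (forall q, dG q <= 0) ->
  (forall eps, 0 < eps -> exists M, forall q, M <= Rabs q -> Rabs (G q) <= eps) ->
  forall q, dG q = 0.
Proof.
  intros Hd Hs Hlim.
  assert (Hm : forall u v, u <= v -> G v <= G u).
  { intros u v Huv. destruct (Req_dec u v) as [->|]; [lra|].
    destruct (MVT_open G dG u v) as [c [Hc1 Hc2]].
    { lra. } { intros; apply Hd. }
    { intros x _. apply cpt_of_cont. apply cont_of_ex_derive. eexists; apply Hd. }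
    specialize (Hs c). nra. }
  assert (Hz : forall q, G q = 0).
  { intros q. apply Rabs_eq_0. apply Rle_antisym; [|apply Rabs_pos].
    apply Rle_plus_epsilon. intros eps Heps. rewrite Rplus_0_l.
    destruct (Hlim eps Heps) as [M HM].
    set (Q := Rabs q + Rabs M + 1).
    assert (HQ1 : M <= Rabs Q) by (unfold Q; rewrite Rabs_right; pose proof (Rabs_pos q); pose proof (Rle_abs M); try lra; pose proof (Rabs_pos M); lra).
    assert (HQ2 : M <= Rabs (- Q)) by (rewrite Rabs_Ropp; auto).
    assert (A1 := HM Q HQ1). assert (A2 := HM (- Q) HQ2).
    assert (B1 : G Q <= G q) by (apply Hm; unfold Q; pose proof (Rle_abs q); pose proof (Rabs_pos M); lra).
    assert (B2 : G q <= G (- Q)) by (apply Hm; unfold Q; pose proof (Rle_abs (-q)); rewrite Rabs_Ropp in *; pose proof (Rabs_pos M); lra).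
    pose proof (Rle_abs (- G Q)) as C1. rewrite Rabs_Ropp in C1.
    pose proof (Rle_abs (G (- Q))) as C2.
    apply Rabs_le. lra. }
  intros q. specialize (Hd q).
  assert (Hd' : is_derive (fun _ => 0) q (dG q)).
  { eapply is_derive_ext; [|exact Hd]. intros; apply Hz. }
  apply is_derive_unique in Hd'. rewrite Derive_const in Hd'. auto.
Qed.

Lemma const_decay (g : R -> R) : (forall q, is_derive g q 0) ->
  (forall eps, 0 < eps -> exists M, forall q, M <= Rabs q -> Rabs (g q) < eps) ->
  forall q, g q = 0.
Proof.
  intros Hd Hl q.
  assert (Hc : forall u v, g u = g v).
  { intros u v. destruct (Rtotal_order u v) as [H|[H|H]].
    - destruct (MVT_open g (fun _ => 0) u v H) as [c [_ Hc]]; auto.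
      intros x _. apply cpt_of_cont, cont_of_ex_derive. eexists; apply Hd. lra.
    - subst; auto.
    - destruct (MVT_open g (fun _ => 0) v u H) as [c [_ Hc]]; auto.
      intros x _. apply cpt_of_cont, cont_of_ex_derive. eexists; apply Hd. lra. }
  apply Rabs_eq_0. apply Rle_antisym; [|apply Rabs_pos].
  apply Rle_plus_epsilon. intros eps Heps. rewrite Rplus_0_l.
  destruct (Hl eps Heps) as [M HM]. rewrite (Hc q (Rabs M)).
  left. apply HM. rewrite Rabs_Rabsolu. apply Rle_abs.
Qed.

Lemma neg_div (a b : R) : - a / b = - (a / b).
Proof. unfold Rdiv; ring. Qed.

Lemma core rho H Phi w F : hyp1 rho H -> hypw w -> H 0 = 1 -> is_Phi rho H Phi ->
  height_eq rho H w F ->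
  (forall p, -1 <= p <= 0 -> 0 <= Derive (Phi (/ F ^ 2)) p) ->
  (forall q, 0 <= A_fun rho H Phi (/ F ^ 2) * w q 0) ->
  (forall q, A_fun rho H Phi (/ F ^ 2) * w q 0 = 0) /\
  (A_fun rho H Phi (/ F ^ 2) = 0 -> forall q p, in_Rbar q p -> w q p = 0).
Proof.
  intros HY HW H0one HP HE Hnn HAw.
  unfold height_eq in HE. cbv zeta in HE.
  destruct HE as [HF [HPDE [HBC [HB0 [delta [Hdel Hd]]]]]].
  set (mu := / F ^ 2) in *.
  assert (Hmu : 0 < mu) by (unfold mu; apply Rinv_0_lt_compat; apply pow_lt; lra).
  destruct (HP mu ltac:(lra)) as [HPd [Hode [HP0 HP1]]].
  set (Ph := Phi mu) in *.
  assert (Hode' : forall p, -1 < p < 0 -> ex_derive (psi H Ph) p /\ Derive (psi H Ph) p - mu * Derive rho p * Ph p = 0).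
  { exact Hode. }
  assert (HL := phi_lip rho H Phi mu HY HP ltac:(lra)). fold Ph in HL.
  assert (Hlb : forall q p, -1 <= p <= 0 -> delta <= hpf H w q p).
  { intros q p Hp. apply (hp_lb rho); auto. }
  assert (HPDE' : forall q p, -1 < p < 0 ->
     Derive (fun v => afun H w q v) p + D2 H w q p - mu * Derive rho p * w q p = 0).
  { intros q p Hp. specialize (HPDE q p ltac:(unfold in_R; lra)).
    rewrite <- HPDE. unfold D2, hh. f_equal. f_equal.
    apply Derive_ext. intros t. unfold afun. fold (hh H w). rewrite dqh_eq, (dph_eq rho); auto.
    ring. }
  assert (HBC' : forall q, afun H w q 0 = mu * rho 0 * w q 0).
  { intros q. specialize (HBC q). fold (hh H w) in HBC. rewrite dqh_eq, (dph_eq rho) in HBC; auto.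
    unfold afun. rewrite neg_div. rewrite H0one in HBC. lra. }
  set (A := A_fun rho H Phi mu) in *.
  assert (HAdef : A = - Derive Ph 0 / Derive H 0 ^ 3 + mu * rho 0 * Ph 0) by reflexivity.
  assert (HID : forall q,
    (forall x, -1 <= x <= 0 -> continuous (fun y => Derive Ph (cl (-1) 0 y) * Nf H w q (cl (-1) 0 y)) x) /\
    ex_RInt (fun t => Derive Ph t * Nf H w q t) (-1) 0 /\
    RInt (fun t => Ph t * D2 H w q t) (-1) 0 = - A * w q 0 - RInt (fun t => Derive Ph t * Nf H w q t) (-1) 0).
  { intros q. rewrite HAdef. apply (ident rho H w Ph mu delta q); auto. }
  assert (HPpos : forall q, 0 <= RInt (fun t => Derive Ph t * Nf H w q t) (-1) 0).
  { intros q. destruct (HID q) as [_ [Hex _]]. apply RInt_ge_0; auto. lra.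
    intros x Hx. apply Rmult_le_pos. apply Hnn; lra. apply Nf_nonneg.
    specialize (Hlb q x ltac:(lra)); lra. apply (h_Hp_pos _ _ HY); lra. }
  assert (HG : forall q, RInt (fun t => Ph t * D2 H w q t) (-1) 0 = 0).
  { apply (mono_const (fun u => RInt (fun t => fG Ph H w u t) (-1) 0)).
    - intros q. apply (G_deriv rho H w Ph delta q); auto.
    - intros q. destruct (HID q) as [_ [_ E]]. rewrite E. specialize (HAw q). specialize (HPpos q). lra.
    - apply (G_decay rho H w Ph delta); auto. }
  assert (HAw0 : forall q, A * w q 0 = 0).
  { intros q. destruct (HID q) as [_ [_ E]]. rewrite HG in E. specialize (HAw q). specialize (HPpos q). lra. }
  split; auto.
  intros HA0.
  assert (HdPc : forall x, continuous (fun y => Derive Ph (cl (-1) 0 y)) x).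
  { destruct HL as [L HL]. apply (lip_cont_cl (Derive Ph) (-1) 0 L); auto; lra. }
  assert (Hpos := phi_pos_deriv rho H Ph mu HY Hmu HPd Hode' HP0 HP1 HdPc Hnn ltac:(rewrite <- HAdef; auto)).
  assert (Hhq : forall q t, -1 < t < 0 -> hqf w q t = 0).
  { intros q t Ht. destruct (HID q) as [Hc [Hex E]].
    rewrite HG, HA0 in E.
    assert (Z := zero_int (fun t => Derive Ph t * Nf H w q t) (-1) 0 ltac:(lra) Hc).
    assert (Z1 : Derive Ph t * Nf H w q t = 0).
    { apply Z; auto; try lra. intros x Hx. apply Rmult_le_pos. apply Hnn; lra. apply Nf_nonneg.
      specialize (Hlb q x ltac:(lra)); lra. apply (h_Hp_pos _ _ HY); lra. }
    assert (Hp1 := Hpos t ltac:(lra)).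
    assert (Nf H w q t = 0).
    { destruct (Rmult_integral _ _ Z1); auto. lra. }
    assert (Hh : 0 < hpf H w q t) by (specialize (Hlb q t ltac:(lra)); lra).
    assert (Q := Nf_ge H w q t Hh ltac:(apply (h_Hp_pos _ _ HY); lra)).
    assert (0 <= hqf w q t ^ 2 / (2 * hpf H w q t ^ 2)).
    { apply Rdiv_le_0_compat. apply pow2_ge_0. apply Rmult_lt_0_compat. lra. apply pow_lt; lra. }
    assert (E2 : hqf w q t ^ 2 / (2 * hpf H w q t ^ 2) = 0) by lra.
    assert (hqf w q t ^ 2 = 0).
    { assert (0 < 2 * hpf H w q t ^ 2) by (apply Rmult_lt_0_compat; [lra|apply pow_lt; lra]).
      apply (f_equal (fun z => z * (2 * hpf H w q t ^ 2))) in E2.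
      rewrite Rmult_0_l in E2. rewrite <- E2. field. lra. }
    destruct (Req_dec (hqf w q t) 0) as [|Hne]; auto. exfalso. apply (pow_nonzero _ 2 Hne); auto. }
  assert (Hint : forall q t, -1 < t < 0 -> w q t = 0).
  { intros q t Ht. apply (const_decay (fun u => w u t)).
    - intros u. rewrite <- (Hhq u t Ht). unfold hqf. simpl. unfold dq.
      apply Derive_correct. apply (proj1 ((hw_d _ HW) nil u t ltac:(simpl; lia))).
    - intros eps Heps. destruct ((hw_decay _ HW) nil ltac:(simpl; lia) eps Heps) as [M HM].
      exists M. intros u Hu. apply (HM u t Hu). unfold in_Rbar; lra. }
  intros q p Hp. unfold in_Rbar in Hp.
  destruct (Req_dec p (-1)) as [->|Hn1]. apply (hw_B _ HW).
  destruct (Req_dec p 0) as [->|Hn0].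
  - apply (cl_limit_eq (fun v => w q v) (-1) 0 0 0); try lra.
    apply (c2d_p (pd nil w)). apply pdc2; auto.
    intros; apply Hint; auto.
  - apply Hint; lra.
Qed.

Definition c0 (H : R -> R) := Derive H (-1) ^ 3.

Lemma phi_facts rho H Phi mu : hyp1 rho H -> is_Phi rho H Phi -> 0 <= mu ->
  (forall x, ex_derive (Phi mu) x) /\
  (forall x, continuous (fun y => Derive (Phi mu) (cl (-1) 0 y)) x) /\
  (forall x, continuous (fun y => psi H (Phi mu) (cl (-1) 0 y)) x) /\
  (forall p, -1 < p < 0 -> is_derive (psi H (Phi mu)) p (mu * Derive rho p * Phi mu p)) /\
  Phi mu (-1) = 0 /\ psi H (Phi mu) (-1) = / c0 H /\ Derive (Phi mu) (-1) = 1 /\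
  (forall p, -1 <= p <= 0 -> Derive (Phi mu) p = Derive H p ^ 3 * psi H (Phi mu) p).
Proof.
  intros HY HP Hmu.
  destruct (HP mu Hmu) as [Hd [Hode [H0 H1]]].
  destruct (phi_lip rho H Phi mu HY HP Hmu) as [L HL].
  assert (HdPc : forall x, continuous (fun y => Derive (Phi mu) (cl (-1) 0 y)) x).
  { apply (lip_cont_cl (Derive (Phi mu)) (-1) 0 L); auto; lra. }
  assert (HHz : forall t, -1 <= t <= 0 -> Derive H t <> 0).
  { intros t Ht. specialize (h_Hp_pos _ _ HY t Ht). lra. }
  split; auto. split; auto. split.
  { apply (cont_cl_all (-1) 0 (psi H (Phi mu))). lra. intros x Hx. unfold psi.
    apply (cdiv (fun y => Derive (Phi mu) (cl (-1) 0 y)) (fun y => Derive H (cl (-1) 0 y) ^ 3)).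
    apply HdPc. apply cpow. apply cl_c; auto. apply cont_of_ex_derive. apply (h_Hp_d _ _ HY).
    rewrite cl_id by auto. apply pow_nonzero; auto. }
  split.
  { intros p Hp. destruct (Hode p Hp) as [He Heq].
    replace (mu * Derive rho p * Phi mu p) with (Derive (psi H (Phi mu)) p) by (unfold psi; lra).
    apply Derive_correct. exact He. }
  split; auto. split.
  { unfold psi, c0. rewrite H1. unfold Rdiv. ring. }
  split; auto.
  intros p Hp. unfold psi. field. apply HHz; auto.
Qed.

Lemma gronwall (E dE : R -> R) (K c : R) : 0 < K -> 0 <= c -> 0 <= E (-1) ->
  (forall x, -1 <= x <= 0 -> continuous (fun y => E (cl (-1) 0 y)) x) ->
  (forall p, -1 < p < 0 -> is_derive E p (dE p)) ->
  (forall p, -1 < p < 0 -> dE p <= K * E p + c) ->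
  forall p, -1 <= p <= 0 -> E p <= (E (-1) + c / K) * exp K.
Proof.
  intros HK Hc HE0 HEc Hd Hb p Hp.
  set (Z := fun x => (E x + c / K) * exp (- K * (x + 1))).
  assert (HZ : Z p <= Z (-1)).
  { apply (mono_cl Z (fun x => (dE x - K * E x - c) * exp (- K * (x + 1))) (-1) 0); try lra.
    - intros x Hx. unfold Z.
      replace ((dE x - K * E x - c) * exp (- K * (x + 1))) with
        (dE x * exp (- K * (x + 1)) + (E x + c / K) * (- K * exp (- K * (x + 1)))) by (field; lra).
      apply (is_derive_mult (fun x => E x + c / K) (fun x => exp (- K * (x + 1)))).
      + replace (dE x) with (dE x + 0) by ring. apply (is_derive_plus E (fun _ => c / K)).
        apply Hd; auto. apply is_derive_cst.
      + replace (- K * exp (- K * (x + 1))) with ((- K * (1 + 0)) * exp (- K * (x + 1))) by ring.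
        apply (is_derive_comp exp (fun x => - K * (x + 1))).
        apply is_derive_Reals. apply derivable_pt_lim_exp.
        apply is_derive_scal. apply (is_derive_plus (fun x => x) (fun _ => 1)).
        apply is_derive_Reals, derivable_pt_lim_id. apply is_derive_cst.
      + intros; apply Rmult_comm.
    - intros x Hx. specialize (Hb x Hx). pose proof (exp_pos (- K * (x + 1))). nra.
    - intros x Hx. unfold Z.
      apply (cmul (fun y => E (cl (-1) 0 y) + c / K) (fun y => exp (- K * (cl (-1) 0 y + 1)))).
      apply cplus. apply HEc; auto. apply ccst.
      apply (cl_c (fun y => exp (- K * (y + 1)))); auto.
      apply (continuous_comp (fun y => - K * (y + 1)) exp).
      apply cmul. apply ccst. apply cplus. apply continuous_id. apply ccst.
      apply cont_of_ex_derive. eexists. apply is_derive_Reals. apply derivable_pt_lim_exp. }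
  unfold Z in HZ. replace (-1 + 1) with 0 in HZ by ring. rewrite Rmult_0_r, exp_0, Rmult_1_r in HZ.
  assert (Hep : 0 < exp (- K * (p + 1))) by apply exp_pos.
  assert (E1 : E p + c / K <= (E (-1) + c / K) * exp (K * (p + 1))).
  { replace (E p + c / K) with ((E p + c / K) * exp (- K * (p + 1)) * exp (K * (p + 1))).
    2:{ rewrite Rmult_assoc, <- exp_plus. replace (- K * (p + 1) + K * (p + 1)) with 0 by ring.
        rewrite exp_0; ring. }
    apply Rmult_le_compat_r. left; apply exp_pos. auto. }
  assert (E2 : exp (K * (p + 1)) <= exp K).
  { destruct (Req_dec p 0) as [->|]. right; f_equal; ring. left; apply exp_increasing. nra. }
  assert (0 <= c / K) by (apply Rdiv_le_0_compat; lra).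
  assert (0 <= E (-1) + c / K \/ E (-1) + c / K < 0) as [Hs|Hs] by lra.
  - assert ((E (-1) + c / K) * exp (K * (p + 1)) <= (E (-1) + c / K) * exp K) by (apply Rmult_le_compat_l; auto).
    lra.
  - lra.
Qed.

Lemma prod_bound (a b B : R) : Rabs b <= B -> a * b <= Rabs a * B.
Proof.
  intros Hb. eapply Rle_trans. apply Rle_abs. rewrite Rabs_mult.
  apply Rmult_le_compat_l. apply Rabs_pos. auto.
Qed.

Lemma two_ab (a b : R) : Rabs (2 * a * b) <= a ^ 2 + b ^ 2.
Proof.
  rewrite !Rabs_mult, (Rabs_right 2) by lra.
  assert (0 <= (Rabs a - Rabs b) ^ 2) by apply pow2_ge_0.
  rewrite <- (pow2_abs a), <- (pow2_abs b). nra.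
Qed.

Lemma abs_le_sq (x : R) : Rabs x <= x ^ 2 + 1.
Proof.
  unfold Rabs; destruct (Rcase_abs x); nra.
Qed.

Lemma hb_bounds rho H : hyp1 rho H -> exists BH Br, 0 <= BH /\ 0 <= Br /\
  (forall p, -1 <= p <= 0 -> Rabs (Derive H p ^ 3) <= BH) /\
  (forall p, -1 <= p <= 0 -> Rabs (Derive rho p) <= Br).
Proof.
  intros HY.
  destruct (bound_cont (fun p => Derive H p ^ 3) (-1) 0) as [BH HBH]; [lra| |].
  { intros. apply cpow. apply cont_of_ex_derive. apply (h_Hp_d _ _ HY). }
  destruct (bound_cont (Derive rho) (-1) 0) as [Br HBr]; [lra| intros; apply (h_rhop_c _ _ HY); auto|].
  exists BH, Br. repeat split; auto.
  eapply Rle_trans; [apply Rabs_pos|apply (HBH 0); lra].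
  eapply Rle_trans; [apply Rabs_pos|apply (HBr 0); lra].
Qed.

Lemma is_derive_sq (f : R -> R) x df : is_derive f x df -> is_derive (fun y => f y ^ 2) x (2 * f x * df).
Proof.
  intros Hf. replace (2 * f x * df) with (INR 2 * df * f x ^ Init.Nat.pred 2) by (simpl; ring).
  apply (is_derive_pow f 2 x df); auto.
Qed.

Lemma phi_bound rho H Phi M0 : hyp1 rho H -> is_Phi rho H Phi -> 0 <= M0 ->
  exists B, forall nu p, 0 <= nu <= M0 -> -1 <= p <= 0 ->
    Rabs (Phi nu p) <= B /\ Rabs (psi H (Phi nu) p) <= B.
Proof.
  intros HY HP HM0.
  destruct (hb_bounds rho H HY) as [BH [Br [HBH0 [HBr0 [HBH HBr]]]]].
  set (K := BH + M0 * Br + 1).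
  assert (HK : 0 < K) by (unfold K; nra).
  exists ((/ c0 H) ^ 2 * exp K + 1).
  intros nu p Hnu Hp.
  destruct (phi_facts rho H Phi nu HY HP ltac:(lra)) as [Hd [HdPc [Hpsc [Hpsd [H0 [Hps0 [H1 Hfk]]]]]]].
  set (f := Phi nu) in *. set (g := psi H f) in *.
  assert (Gr := gronwall (fun x => f x ^ 2 + g x ^ 2)
     (fun x => 2 * f x * (Derive H x ^ 3 * g x) + 2 * g x * (nu * Derive rho x * f x)) K 0 HK ltac:(lra)).
  assert (HE : f p ^ 2 + g p ^ 2 <= (/ c0 H) ^ 2 * exp K).
  { replace ((/ c0 H) ^ 2) with ((f (-1) ^ 2 + g (-1) ^ 2) + 0 / K).
    2:{ rewrite H0, Hps0. unfold Rdiv. ring. }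
    apply Gr; auto.
    - apply Rplus_le_le_0_compat; apply pow2_ge_0.
    - intros x Hx. apply (cplus (fun y => f (cl (-1) 0 y) ^ 2) (fun y => g (cl (-1) 0 y) ^ 2)).
      apply cpow. apply (cl_c f); auto. apply cont_of_ex_derive; auto.
      apply cpow. apply Hpsc.
    - intros x Hx. apply (is_derive_plus (fun y => f y ^ 2) (fun y => g y ^ 2)).
      + apply is_derive_sq. rewrite <- Hfk by lra. apply Derive_correct; auto.
      + apply is_derive_sq. apply Hpsd; auto.
    - intros x Hx. rewrite Rplus_0_r.
      assert (A1 : 2 * f x * (Derive H x ^ 3 * g x) <= (f x ^ 2 + g x ^ 2) * BH).
      { replace (2 * f x * (Derive H x ^ 3 * g x)) with ((2 * f x * g x) * Derive H x ^ 3) by ring.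
        eapply Rle_trans. apply (prod_bound _ _ BH). apply HBH; lra.
        apply Rmult_le_compat_r; auto. apply two_ab. }
      assert (A2 : 2 * g x * (nu * Derive rho x * f x) <= (f x ^ 2 + g x ^ 2) * (M0 * Br)).
      { replace (2 * g x * (nu * Derive rho x * f x)) with ((2 * f x * g x) * (nu * Derive rho x)) by ring.
        eapply Rle_trans. apply (prod_bound _ _ (M0 * Br)).
        rewrite Rabs_mult, (Rabs_right nu) by lra.
        assert (Rabs (Derive rho x) <= Br) by (apply HBr; lra). pose proof (Rabs_pos (Derive rho x)).
        apply Rmult_le_compat; lra.
        apply Rmult_le_compat_r. nra. apply two_ab. }
      assert (0 <= f x ^ 2 + g x ^ 2) by (apply Rplus_le_le_0_compat; apply pow2_ge_0).
      unfold K. nra. }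
  assert (0 <= f p ^ 2) by apply pow2_ge_0. assert (0 <= g p ^ 2) by apply pow2_ge_0.
  split.
  - eapply Rle_trans. apply abs_le_sq. lra.
  - eapply Rle_trans. apply abs_le_sq. lra.
Qed.

Lemma sq_le_abs (x y : R) : 0 <= y -> x ^ 2 <= y ^ 2 -> Rabs x <= y.
Proof.
  intros Hy Hxy. rewrite <- (pow2_abs x) in Hxy. pose proof (Rabs_pos x).
  destruct (Rle_lt_dec (Rabs x) y); auto. nra.
Qed.

Lemma phi_lip_mu rho H Phi M0 : hyp1 rho H -> is_Phi rho H Phi -> 0 <= M0 ->
  exists C, forall mu nu p, 0 <= mu <= M0 -> 0 <= nu <= M0 -> -1 <= p <= 0 ->
    Rabs (Phi mu p - Phi nu p) <= C * Rabs (mu - nu) /\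
    Rabs (psi H (Phi mu) p - psi H (Phi nu) p) <= C * Rabs (mu - nu).
Proof.
  intros HY HP HM0.
  destruct (hb_bounds rho H HY) as [BH [Br [HBH0 [HBr0 [HBH HBr]]]]].
  destruct (phi_bound rho H Phi M0 HY HP HM0) as [B HB].
  set (K := BH + M0 * Br + 1).
  assert (HK : 0 < K) by (unfold K; nra).
  set (D := (Br * B) ^ 2 * exp K / K).
  assert (HD : 0 <= D).
  { unfold D. apply Rdiv_le_0_compat; [|lra]. apply Rmult_le_pos. apply pow2_ge_0. left; apply exp_pos. }
  exists (sqrt D).
  intros mu nu p Hmu Hnu Hp.
  destruct (phi_facts rho H Phi mu HY HP ltac:(lra)) as [Hd1 [HdPc1 [Hpsc1 [Hpsd1 [H01 [Hps01 [H11 Hfk1]]]]]]].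
  destruct (phi_facts rho H Phi nu HY HP ltac:(lra)) as [Hd2 [HdPc2 [Hpsc2 [Hpsd2 [H02 [Hps02 [H12 Hfk2]]]]]]].
  set (f1 := Phi mu) in *. set (g1 := psi H f1) in *.
  set (f2 := Phi nu) in *. set (g2 := psi H f2) in *.
  set (c := (mu - nu) ^ 2 * (Br * B) ^ 2).
  assert (Hc : 0 <= c) by (unfold c; apply Rmult_le_pos; apply pow2_ge_0).
  assert (Gr := gronwall (fun x => (f1 x - f2 x) ^ 2 + (g1 x - g2 x) ^ 2)
     (fun x => 2 * (f1 x - f2 x) * (Derive H x ^ 3 * (g1 x - g2 x))
             + 2 * (g1 x - g2 x) * (mu * Derive rho x * f1 x - nu * Derive rho x * f2 x)) K c HK Hc).
  assert (HE : (f1 p - f2 p) ^ 2 + (g1 p - g2 p) ^ 2 <= (mu - nu) ^ 2 * D).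
  { replace ((mu - nu) ^ 2 * D) with (((f1 (-1) - f2 (-1)) ^ 2 + (g1 (-1) - g2 (-1)) ^ 2 + c / K) * exp K).
    2:{ rewrite H01, H02, Hps01, Hps02, !Rminus_diag. unfold c, D. field. lra. }
    apply Gr; auto.
    - apply Rplus_le_le_0_compat; apply pow2_ge_0.
    - intros x Hx.
      apply (cplus (fun y => (f1 (cl (-1) 0 y) - f2 (cl (-1) 0 y)) ^ 2) (fun y => (g1 (cl (-1) 0 y) - g2 (cl (-1) 0 y)) ^ 2)).
      + apply (cpow (fun y => f1 (cl (-1) 0 y) - f2 (cl (-1) 0 y))).
        apply (cl_c (fun y => f1 y - f2 y)); auto. apply cminus; apply cont_of_ex_derive; auto.
      + apply (cpow (fun y => g1 (cl (-1) 0 y) - g2 (cl (-1) 0 y))). apply cminus. apply Hpsc1. apply Hpsc2.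
    - intros x Hx.
      apply (is_derive_plus (fun y => (f1 y - f2 y) ^ 2) (fun y => (g1 y - g2 y) ^ 2)).
      + apply (is_derive_sq (fun y => f1 y - f2 y)).
        replace (Derive H x ^ 3 * (g1 x - g2 x)) with (Derive f1 x - Derive f2 x) by (rewrite Hfk1, Hfk2 by lra; ring).
        apply (is_derive_minus f1 f2); apply Derive_correct; auto.
      + apply (is_derive_sq (fun y => g1 y - g2 y)).
        apply (is_derive_minus g1 g2); auto.
    - intros x Hx.
      set (u := f1 x - f2 x). set (v := g1 x - g2 x).
      assert (Hfx : Rabs (f2 x) <= B) by (apply (HB nu x); lra).
      assert (A1 : 2 * u * (Derive H x ^ 3 * v) <= (u ^ 2 + v ^ 2) * BH).
      { replace (2 * u * (Derive H x ^ 3 * v)) with ((2 * u * v) * Derive H x ^ 3) by ring.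
        eapply Rle_trans. apply (prod_bound _ _ BH). apply HBH; lra.
        apply Rmult_le_compat_r; auto. apply two_ab. }
      assert (A2 : 2 * v * (mu * Derive rho x * u) <= (u ^ 2 + v ^ 2) * (M0 * Br)).
      { replace (2 * v * (mu * Derive rho x * u)) with ((2 * u * v) * (mu * Derive rho x)) by ring.
        eapply Rle_trans. apply (prod_bound _ _ (M0 * Br)).
        rewrite Rabs_mult, (Rabs_right mu) by lra.
        assert (Rabs (Derive rho x) <= Br) by (apply HBr; lra). pose proof (Rabs_pos (Derive rho x)).
        apply Rmult_le_compat; lra.
        apply Rmult_le_compat_r. nra. apply two_ab. }
      set (X := (mu - nu) * Derive rho x * f2 x).
      assert (A3 : 2 * v * X <= v ^ 2 + X ^ 2).
      { eapply Rle_trans. apply Rle_abs. apply two_ab. }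
      assert (A4 : X ^ 2 <= c).
      { unfold X, c. rewrite <- (pow2_abs ((mu - nu) * Derive rho x * f2 x)).
        rewrite !Rabs_mult.
        replace ((mu - nu) ^ 2 * (Br * B) ^ 2) with ((Rabs (mu - nu) * (Br * B)) ^ 2) by
          (rewrite <- (pow2_abs (mu - nu)); ring).
        apply pow_incr. split.
        apply Rmult_le_pos; [apply Rmult_le_pos|]; apply Rabs_pos.
        rewrite Rmult_assoc. apply Rmult_le_compat_l. apply Rabs_pos.
        apply Rmult_le_compat; try apply Rabs_pos; auto. apply HBr; lra. }
      replace (mu * Derive rho x * f1 x - nu * Derive rho x * f2 x) with (mu * Derive rho x * u + X)
        by (unfold u, X; ring).
      assert (0 <= u ^ 2 + v ^ 2) by (apply Rplus_le_le_0_compat; apply pow2_ge_0).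
      assert (0 <= v ^ 2) by apply pow2_ge_0.
      unfold K. nra. }
  assert (0 <= (f1 p - f2 p) ^ 2) by apply pow2_ge_0. assert (0 <= (g1 p - g2 p) ^ 2) by apply pow2_ge_0.
  assert (Hs : (sqrt D * Rabs (mu - nu)) ^ 2 = (mu - nu) ^ 2 * D).
  { rewrite Rpow_mult_distr, pow2_abs. replace (sqrt D ^ 2) with D. ring.
    simpl. rewrite Rmult_1_r, sqrt_sqrt; auto. }
  assert (0 <= sqrt D * Rabs (mu - nu)) by (apply Rmult_le_pos; [apply sqrt_pos|apply Rabs_pos]).
  split; apply sq_le_abs; auto; rewrite Hs; lra.
Qed.

Definition TT (Phi : R -> R -> R) mu := forall p, -1 < p <= 0 -> 0 < Phi mu p.

Lemma A_eq rho H Phi mu : A_fun rho H Phi mu = - psi H (Phi mu) 0 + mu * rho 0 * Phi mu 0.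
Proof. unfold A_fun, psi. rewrite neg_div. reflexivity. Qed.

Lemma A_lip rho H Phi M0 : hyp1 rho H -> is_Phi rho H Phi -> 0 <= M0 ->
  exists LA, forall mu nu, 0 <= mu <= M0 -> 0 <= nu <= M0 ->
    Rabs (A_fun rho H Phi mu - A_fun rho H Phi nu) <= LA * Rabs (mu - nu).
Proof.
  intros HY HP HM0.
  destruct (phi_lip_mu rho H Phi M0 HY HP HM0) as [C HC].
  destruct (phi_bound rho H Phi M0 HY HP HM0) as [B HB].
  exists (C + Rabs (rho 0) * (M0 * C + B)).
  intros mu nu Hmu Hnu. rewrite !A_eq.
  destruct (HC mu nu 0 Hmu Hnu ltac:(lra)) as [C1 C2].
  destruct (HB nu 0 Hnu ltac:(lra)) as [B1 _].
  replace (- psi H (Phi mu) 0 + mu * rho 0 * Phi mu 0 - (- psi H (Phi nu) 0 + nu * rho 0 * Phi nu 0))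
    with (- (psi H (Phi mu) 0 - psi H (Phi nu) 0) + rho 0 * (mu * (Phi mu 0 - Phi nu 0) + (mu - nu) * Phi nu 0)) by ring.
  eapply Rle_trans. apply Rabs_triang. rewrite Rabs_Ropp, Rabs_mult.
  assert (Q : Rabs (mu * (Phi mu 0 - Phi nu 0) + (mu - nu) * Phi nu 0) <= (M0 * C + B) * Rabs (mu - nu)).
  { eapply Rle_trans. apply Rabs_triang. rewrite !Rabs_mult. rewrite (Rabs_right mu) by lra.
    assert (0 <= Rabs (mu - nu)) by apply Rabs_pos. assert (0 <= Rabs (Phi nu 0)) by apply Rabs_pos.
    assert (0 <= Rabs (Phi mu 0 - Phi nu 0)) by apply Rabs_pos.
    assert (mu * Rabs (Phi mu 0 - Phi nu 0) <= M0 * (C * Rabs (mu - nu))) by (apply Rmult_le_compat; lra).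
    assert (Rabs (mu - nu) * Rabs (Phi nu 0) <= Rabs (mu - nu) * B) by (apply Rmult_le_compat_l; lra).
    nra. }
  assert (Rabs (rho 0) * Rabs (mu * (Phi mu 0 - Phi nu 0) + (mu - nu) * Phi nu 0) <=
          Rabs (rho 0) * ((M0 * C + B) * Rabs (mu - nu))) by (apply Rmult_le_compat_l; [apply Rabs_pos|auto]).
  nra.
Qed.

Lemma psi0_const rho H Phi : hyp1 rho H -> is_Phi rho H Phi ->
  forall p, -1 <= p <= 0 -> psi H (Phi 0) p = / c0 H.
Proof.
  intros HY HP p Hp.
  destruct (phi_facts rho H Phi 0 HY HP ltac:(lra)) as [Hd [HdPc [Hpsc [Hpsd [H0 [Hps0 [H1 Hfk]]]]]]].
  rewrite <- Hps0.
  assert (Q := lip_cl (psi H (Phi 0)) (fun _ => 0) (-1) 0 0).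
  assert (Rabs (psi H (Phi 0) p - psi H (Phi 0) (-1)) <= 0 * Rabs (p - -1)).
  { apply Q; auto; try lra.
    - intros x Hx. specialize (Hpsd x Hx). rewrite Rmult_0_l, Rmult_0_l in Hpsd. exact Hpsd.
    - intros; rewrite Rabs_R0; lra. }
  rewrite Rmult_0_l in H2. pose proof (Rabs_pos (psi H (Phi 0) p - psi H (Phi 0) (-1))).
  assert (Rabs (psi H (Phi 0) p - psi H (Phi 0) (-1)) = 0) by lra.
  apply Rabs_eq_0 in H4. lra.
Qed.

Lemma c0_pos rho H : hyp1 rho H -> 0 < c0 H.
Proof. intros HY. unfold c0. apply pow_lt. apply (h_Hp_pos _ _ HY). lra. Qed.

Lemma A0_neg rho H Phi : hyp1 rho H -> is_Phi rho H Phi -> A_fun rho H Phi 0 < 0.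
Proof.
  intros HY HP. rewrite A_eq. rewrite (psi0_const rho H Phi HY HP 0) by lra.
  assert (0 < / c0 H) by (apply Rinv_0_lt_compat; apply (c0_pos rho); auto). lra.
Qed.

Lemma pos_from_deriv (f : R -> R) p : (forall x, ex_derive f x) -> f (-1) = 0 -> -1 < p ->
  (forall x, -1 < x < p -> 0 < Derive f x) -> 0 < f p.
Proof.
  intros Hd H0 Hp Hpos.
  destruct (MVT_open f (Derive f) (-1) p Hp) as [c [Hc1 Hc2]].
  { intros; apply Derive_correct; auto. }
  { intros; apply cpt_of_cont, cont_of_ex_derive; auto. }
  rewrite H0 in Hc2. specialize (Hpos c Hc1). nra.
Qed.

Lemma T0 rho H Phi : hyp1 rho H -> is_Phi rho H Phi -> TT Phi 0.
Proof.
  intros HY HP p Hp.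
  destruct (phi_facts rho H Phi 0 HY HP ltac:(lra)) as [Hd [HdPc [Hpsc [Hpsd [H0 [Hps0 [H1 Hfk]]]]]]].
  apply pos_from_deriv; auto. lra.
  intros x Hx. rewrite Hfk by lra. rewrite (psi0_const rho H Phi HY HP x) by lra.
  apply Rmult_lt_0_compat. apply pow_lt. apply (h_Hp_pos _ _ HY); lra.
  apply Rinv_0_lt_compat. apply (c0_pos rho); auto.
Qed.

Lemma psi_mono rho H Phi mu : hyp1 rho H -> is_Phi rho H Phi -> 0 <= mu ->
  (forall p, -1 <= p <= 0 -> 0 <= Phi mu p) ->
  forall s t, -1 < s -> s <= t -> t < 0 -> psi H (Phi mu) t <= psi H (Phi mu) s.
Proof.
  intros HY HP Hmu Hnn s t Hs Hst Ht.
  destruct (phi_facts rho H Phi mu HY HP Hmu) as [Hd [HdPc [Hpsc [Hpsd [H0 [Hps0 [H1 Hfk]]]]]]].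
  apply (mono_cl (psi H (Phi mu)) (fun p => mu * Derive rho p * Phi mu p) s t); auto; try lra.
  - intros x Hx. apply Hpsd. lra.
  - intros x Hx. assert (Derive rho x <= 0) by (apply (h_rhop_neg _ _ HY); lra).
    assert (0 <= Phi mu x) by (apply Hnn; lra).
    assert (0 <= mu * (- Derive rho x) * Phi mu x) by (apply Rmult_le_pos; [apply Rmult_le_pos|]; lra). lra.
  - intros x Hx. apply cont_cl; auto. apply cont_of_ex_derive. eexists. apply Hpsd. lra.
Qed.

Lemma Z0 rho H Phi mu t : hyp1 rho H -> is_Phi rho H Phi -> 0 <= mu -> -1 < t <= 0 ->
  (forall p, -1 <= p <= 0 -> 0 <= Phi mu p) ->
  (forall s, -1 < s < t -> 0 <= psi H (Phi mu) s) -> Phi mu t = 0 -> False.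
Proof.
  intros HY HP Hmu Ht Hnn Hps Hz.
  destruct (phi_facts rho H Phi mu HY HP Hmu) as [Hd [HdPc [Hpsc [Hpsd [H0 [Hps0 [H1 Hfk]]]]]]].
  assert (Hdnn : forall s, -1 < s < t -> 0 <= Derive (Phi mu) s).
  { intros s Hs. rewrite Hfk by lra. apply Rmult_le_pos; [|apply Hps; auto].
    apply pow_le. left. apply (h_Hp_pos _ _ HY); lra. }
  assert (Hzero : forall s, -1 <= s <= t -> Phi mu s = 0).
  { intros s Hs. assert (- Phi mu t <= - Phi mu s).
    { apply (mono_cl (fun y => - Phi mu y) (fun y => - Derive (Phi mu) y) (-1) t); try lra.
      - intros x Hx. apply (is_derive_opp (Phi mu)). apply Derive_correct; auto.
      - intros x Hx. specialize (Hdnn x Hx). lra.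
      - intros x Hx. apply (cont_cl (-1) t x (fun y => - Phi mu y)); auto. apply copp. apply cont_of_ex_derive; auto. }
    specialize (Hnn s ltac:(lra)). lra. }
  assert (Hd0 : forall y, -1 < y < t -> Derive (Phi mu) (cl (-1) 0 y) = 0).
  { intros y Hy. rewrite cl_id by lra. apply is_derive_unique.
    apply (is_derive_ext_loc (fun _ => 0)).
    eapply filter_imp; [|apply (loc_open (-1) t y Hy)]. intros z Hz'. simpl. rewrite Hzero; lra.
    apply is_derive_cst. }
  assert (Q := cl_limit_eq (fun y => Derive (Phi mu) (cl (-1) 0 y)) (-1) t (-1) 0 ltac:(lra) ltac:(lra) (HdPc (-1)) Hd0).
  simpl in Q. rewrite cl_id in Q by lra. lra.
Qed.

Lemma strict rho H Phi mu : hyp1 rho H -> is_Phi rho H Phi -> 0 <= mu ->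
  (forall p, -1 <= p <= 0 -> 0 <= Phi mu p) ->
  TT Phi mu \/ 0 < A_fun rho H Phi mu.
Proof.
  intros HY HP Hmu Hnn.
  destruct (phi_facts rho H Phi mu HY HP Hmu) as [Hd [HdPc [Hpsc [Hpsd [H0 [Hps0 [H1 Hfk]]]]]]].
  assert (Hint : forall t, -1 < t < 0 -> 0 < Phi mu t).
  { intros t Ht. destruct (Rle_lt_dec (Phi mu t) 0) as [Hle|]; auto. exfalso.
    assert (Hz : Phi mu t = 0) by (specialize (Hnn t ltac:(lra)); lra).
    assert (HD : Derive (Phi mu) t = 0).
    { rewrite <- (Derive_Reals (Phi mu) t (ex_derive_Reals_0 _ _ (Hd t))).
      apply (deriv_minimum (Phi mu) (-1) 0 t); try lra.
      intros x Hx1 Hx2. rewrite Hz. apply Hnn; lra. }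
    apply (Z0 rho H Phi mu t HY HP Hmu ltac:(lra) Hnn); auto.
    intros s Hs. assert (psi H (Phi mu) t <= psi H (Phi mu) s) by (apply (psi_mono rho); auto; lra).
    assert (psi H (Phi mu) t = 0) by (unfold psi; rewrite HD; unfold Rdiv; ring). lra. }
  destruct (Rlt_le_dec 0 (Phi mu 0)) as [Hp0|Hle0].
  { left. intros p Hp. destruct (Req_dec p 0) as [->|]; auto. apply Hint; lra. }
  right. assert (Hz : Phi mu 0 = 0) by (specialize (Hnn 0 ltac:(lra)); lra).
  assert (HH0 : 0 < Derive H 0) by (apply (h_Hp_pos _ _ HY); lra).
  assert (HD : Derive (Phi mu) 0 < 0).
  { destruct (Rlt_le_dec (Derive (Phi mu) 0) 0) as [|Hge]; auto. exfalso.
    destruct (Rle_lt_or_eq_dec 0 _ Hge) as [Hgt|Heq].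
    - (* derivative positive at 0 -> Phi negative just before 0 *)
      assert (Hc := HdPc 0).
      assert (Hh : 0 < Derive (Phi mu) 0 / 2) by lra.
      destruct (proj1 (filterlim_locally _ _) Hc (mkposreal _ Hh)) as [e He].
      assert (0 < e) by apply cond_pos.
      set (e' := Rmin (e / 2) (1 / 2)).
      assert (0 < e') by (apply Rmin_pos; lra). assert (e' <= e / 2) by apply Rmin_l.
      assert (e' <= 1 / 2) by apply Rmin_r.
      assert (Hdiff : 0 < Phi mu 0 - Phi mu (- e')).
      { destruct (MVT_open (Phi mu) (Derive (Phi mu)) (- e') 0) as [c [Hc1 Hc2]]; try lra.
        { intros; apply Derive_correct; auto. }
        { intros; apply cpt_of_cont, cont_of_ex_derive; auto. }
        rewrite Hc2. apply Rmult_lt_0_compat; [|lra].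
        assert (Hb : ball 0 e c) by (apply ball_R; apply Rabs_def1; lra).
        specialize (He c Hb).
        assert (Q : Rabs (Derive (Phi mu) (cl (-1) 0 c) - Derive (Phi mu) (cl (-1) 0 0)) < Derive (Phi mu) 0 / 2) by exact He.
        rewrite !cl_id in Q by lra. apply Rabs_def2 in Q. lra. }
      rewrite Hz in Hdiff. specialize (Hnn (- e') ltac:(lra)). lra.
    -
      apply (Z0 rho H Phi mu 0 HY HP Hmu ltac:(lra) Hnn); auto.
      intros s Hs.
      assert (Hp0 : psi H (Phi mu) 0 = 0) by (unfold psi; rewrite <- Heq; unfold Rdiv; ring).
      assert (Q := closed_lb (fun y => psi H (Phi mu) s - psi H (Phi mu) (cl (-1) 0 y)) s 0 0 0 ltac:(lra) ltac:(lra)).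
      simpl in Q. rewrite cl_id in Q by lra.
      assert (0 <= psi H (Phi mu) s - psi H (Phi mu) 0).
      { apply Q. apply cminus. apply ccst. apply Hpsc.
        intros y Hy. rewrite cl_id by lra. assert (psi H (Phi mu) y <= psi H (Phi mu) s) by (apply (psi_mono rho); auto; lra).
        lra. }
      lra. }
  rewrite A_eq, Hz. unfold psi.
  assert (Hq : 0 < - Derive (Phi mu) 0 / Derive H 0 ^ 3).
  { apply Rdiv_lt_0_compat. lra. apply pow_lt; lra. }
  rewrite neg_div in Hq. lra.
Qed.

Lemma Rabs_def2' (x y : R) : Rabs x <= y -> - y <= x <= y.
Proof. unfold Rabs; destruct (Rcase_abs x); intros; lra. Qed.

Lemma open_T rho H Phi M0 s : hyp1 rho H -> is_Phi rho H Phi -> 0 <= s <= M0 -> TT Phi s ->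
  exists delta, 0 < delta /\ forall mu, 0 <= mu <= M0 -> Rabs (mu - s) < delta -> TT Phi mu.
Proof.
  intros HY HP Hs HT.
  destruct (phi_lip_mu rho H Phi M0 HY HP ltac:(lra)) as [C HC].
  destruct (hb_bounds rho H HY) as [BH [Br [HBH0 [HBr0 [HBH HBr]]]]].
  destruct (phi_facts rho H Phi s HY HP ltac:(lra)) as [Hd [HdPc [Hpsc [Hpsd [H0 [Hps0 [H1 Hfk]]]]]]].
  set (Ca := Rabs C + 1).
  assert (HCa : 0 < Ca) by (unfold Ca; pose proof (Rabs_pos C); lra).
  assert (HCle : C <= Ca) by (unfold Ca; pose proof (Rle_abs C); lra).
  assert (Hh : 0 < 1 / 2) by lra.
  destruct (proj1 (filterlim_locally _ _) (HdPc (-1)) (mkposreal _ Hh)) as [e He].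
  assert (0 < e) by apply cond_pos.
  set (eta := Rmin (e / 2) (1 / 2)).
  assert (0 < eta) by (apply Rmin_pos; lra). assert (eta <= e / 2) by apply Rmin_l.
  assert (eta <= 1 / 2) by apply Rmin_r.
  assert (Hd1 : forall y, -1 <= y <= -1 + eta -> 1 / 2 < Derive (Phi s) y).
  { intros y Hy. assert (Hb : ball (-1) e y) by (apply ball_R; apply Rabs_def1; lra).
    specialize (He y Hb).
    assert (Q : Rabs (Derive (Phi s) (cl (-1) 0 y) - Derive (Phi s) (cl (-1) 0 (-1))) < 1 / 2) by exact He.
    rewrite !cl_id in Q by lra. rewrite H1 in Q. apply Rabs_def2 in Q. lra. }
  destruct (min_pos_cont (Phi s) (-1 + eta) 0) as [m [Hm Hmin]]; try lra.
  { intros; apply cont_of_ex_derive; auto. }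
  { intros x Hx. apply HT. lra. }
  set (delta := Rmin (m / (2 * Ca)) (1 / (4 * ((BH + 1) * Ca)))).
  assert (Hdel1 : delta <= m / (2 * Ca)) by apply Rmin_l.
  assert (Hdel2 : delta <= 1 / (4 * ((BH + 1) * Ca))) by apply Rmin_r.
  assert (Hdel : 0 < delta).
  { apply Rmin_pos; apply Rdiv_lt_0_compat; try lra; nra. }
  exists delta. split; auto.
  intros mu Hmu Hdm p Hp.
  assert (Hcm : forall x, -1 <= x <= 0 -> Rabs (Phi mu x - Phi s x) <= Ca * delta /\
                                         Rabs (psi H (Phi mu) x - psi H (Phi s) x) <= Ca * delta).
  { intros x Hx. destruct (HC mu s x Hmu Hs Hx) as [Q1 Q2].
    pose proof (Rabs_pos (mu - s)).
    assert (C * Rabs (mu - s) <= Ca * delta).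
    { destruct (Rle_lt_dec 0 C). apply Rmult_le_compat; lra. nra. }
    split; lra. }
  destruct (Rle_lt_dec (-1 + eta) p) as [Hpe|Hpe].
  - destruct (Hcm p ltac:(lra)) as [Q _]. apply Rabs_def2' in Q.
    specialize (Hmin p ltac:(lra)).
    assert (Ca * delta <= m / 2).
    { apply Rle_trans with (Ca * (m / (2 * Ca))). apply Rmult_le_compat_l; lra. right; field; lra. }
    lra.
  - destruct (phi_facts rho H Phi mu HY HP ltac:(lra)) as [Hd' [_ [_ [_ [H0' [_ [_ Hfk']]]]]]].
    apply pos_from_deriv; auto. lra.
    intros x Hx. rewrite Hfk' by lra.
    destruct (Hcm x ltac:(lra)) as [_ Q]. 
    assert (Hs1 := Hd1 x ltac:(lra)). rewrite Hfk in Hs1 by lra.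
    assert (HB := HBH x ltac:(lra)).
    assert (E : Derive H x ^ 3 * psi H (Phi mu) x =
      Derive H x ^ 3 * psi H (Phi s) x + Derive H x ^ 3 * (psi H (Phi mu) x - psi H (Phi s) x)) by ring.
    rewrite E.
    assert (Hb2 : Rabs (Derive H x ^ 3 * (psi H (Phi mu) x - psi H (Phi s) x)) <= (BH + 1) * (Ca * delta)).
    { rewrite Rabs_mult. apply Rmult_le_compat; try apply Rabs_pos; lra. }
    assert ((BH + 1) * (Ca * delta) <= 1 / 4).
    { apply Rle_trans with ((BH + 1) * Ca * (1 / (4 * ((BH + 1) * Ca)))).
      rewrite Rmult_assoc. apply Rmult_le_compat_l. lra. apply Rmult_le_compat_l; lra.
      right. field. split; lra. }
    apply Rabs_def2' in Hb2. lra.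
Qed.


Lemma sturm rho H Phi mc : hyp1 rho H -> is_Phi rho H Phi -> is_mu_cr rho H Phi mc ->
  forall p, -1 <= p <= 0 -> 0 <= Derive (Phi mc) p.
Proof.
  intros HY HP [Hmc [HA Hmin]].
  set (S := fun x => 0 <= x <= mc /\ forall y, 0 <= y <= x -> TT Phi y).
  assert (HT0 := T0 rho H Phi HY HP).
  assert (Hb : bound S) by (exists mc; intros x [Hx _]; lra).
  assert (Hne : exists x, S x).
  { exists 0. split. lra. intros y Hy. replace y with 0 by lra. auto. }
  destruct (completeness S Hb Hne) as [s [Hub Hlub]].
  assert (Hs0 : 0 <= s) by (apply Hub; split; [lra|intros y Hy; replace y with 0 by lra; auto]).
  assert (Hsm : s <= mc) by (apply Hlub; intros x [Hx _]; lra).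
  assert (Hbelow : forall y, 0 <= y < s -> TT Phi y).
  { intros y Hy. apply NNPP. intros Hn.
    assert (s <= y).
    { apply Hlub. intros x [Hx Hx2]. destruct (Rle_lt_dec x y) as [|Hlt]; auto.
      exfalso. apply Hn. apply Hx2. lra. }
    lra. }
  destruct (A_lip rho H Phi mc HY HP ltac:(lra)) as [LA HLA].
  assert (HgC : forall x, continuous (fun y => A_fun rho H Phi (cl 0 mc y)) x).
  { apply (lip_cont_cl (A_fun rho H Phi) 0 mc LA). lra. intros; apply HLA; auto. }
  assert (HTs : TT Phi s).
  { destruct (Req_dec s 0) as [->|Hs]; auto.
    destruct (phi_lip_mu rho H Phi mc HY HP ltac:(lra)) as [C HC].
    assert (Hnn : forall p, -1 <= p <= 0 -> 0 <= Phi s p).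
    { intros p Hp. apply Rle_plus_epsilon. intros eps Heps.
      set (Ca := Rabs C + 1).
      assert (HCa : 0 < Ca) by (unfold Ca; pose proof (Rabs_pos C); lra).
      set (y := Rmax 0 (s - eps / Ca)).
      assert (Hy1 : 0 <= y) by apply Rmax_l.
      assert (Hy2 : y < s).
      { unfold y, Rmax. destruct (Rle_dec 0 (s - eps / Ca)). assert (0 < eps / Ca) by (apply Rdiv_lt_0_compat; lra). lra. lra. }
      assert (Hy3 : s - eps / Ca <= y) by apply Rmax_r.
      assert (Hpy : 0 <= Phi y p).
      { destruct (Req_dec p (-1)) as [->|].
        destruct (phi_facts rho H Phi y HY HP Hy1) as [_ [_ [_ [_ [H0 _]]]]]. lra.
        left. apply (Hbelow y); lra. }
      destruct (HC s y p ltac:(lra) ltac:(lra) Hp) as [Q _].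
      apply Rabs_def2' in Q.
      assert (C * Rabs (s - y) <= eps).
      { rewrite Rabs_right by lra.
        apply Rle_trans with (Ca * (s - y)). apply Rmult_le_compat_r. lra. unfold Ca; pose proof (Rle_abs C); lra.
        apply Rle_trans with (Ca * (eps / Ca)). apply Rmult_le_compat_l; lra. right; field; lra. }
      lra. }
    destruct (strict rho H Phi s HY HP Hs0 Hnn) as [|HAs]; auto.
    exfalso.
    assert (HA0 := A0_neg rho H Phi HY HP).
    destruct (IVT (fun y => A_fun rho H Phi (cl 0 mc y)) 0 s) as [z [Hz Hz2]].
    { intros x. apply cpt_of_cont. apply HgC. }
    { lra. }
    { rewrite cl_id by lra. auto. }
    { rewrite cl_id by lra. auto. }
    rewrite cl_id in Hz2 by lra.
    destruct (Req_dec z 0) as [->|Hz0]. lra.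
    destruct (Req_dec z s) as [->|Hzs]. lra.
    apply (Hmin z); auto. lra. }
  assert (Hsmc : s = mc).
  { destruct (Req_dec s mc) as [|Hne']; auto. exfalso.
    destruct (open_T rho H Phi mc s HY HP ltac:(lra) HTs) as [del [Hdel Hdel2]].
    set (s' := Rmin (s + del / 2) mc).
    assert (Hs'1 : s' <= s + del / 2) by apply Rmin_l. assert (Hs'2 : s' <= mc) by apply Rmin_r.
    assert (Hs'3 : s < s') by (unfold s', Rmin; destruct (Rle_dec (s + del/2) mc); lra).
    assert (S s').
    { split. lra. intros y Hy. destruct (Rlt_le_dec y s). apply Hbelow; lra.
      apply Hdel2. lra. apply Rabs_def1; lra. }
    specialize (Hub s' H0). lra. }
  rewrite Hsmc in HTs.
  destruct (phi_facts rho H Phi mc HY HP ltac:(lra)) as [Hd [HdPc [Hpsc [Hpsd [H0 [Hps0 [H1 Hfk]]]]]]].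
  assert (Hnn : forall p, -1 <= p <= 0 -> 0 <= Phi mc p).
  { intros p Hp. destruct (Req_dec p (-1)) as [->|]. lra. left; apply HTs; lra. }
  assert (Hps0' : 0 < psi H (Phi mc) 0).
  { rewrite A_eq in HA. assert (0 < mc * rho 0 * Phi mc 0).
    { apply Rmult_lt_0_compat. apply Rmult_lt_0_compat; auto. apply (h_rho_pos _ _ HY); lra. apply HTs; lra. }
    lra. }
  assert (Hpsi : forall t, -1 < t < 0 -> psi H (Phi mc) 0 <= psi H (Phi mc) t).
  { intros t Ht.
    assert (Q := closed_lb (fun y => psi H (Phi mc) t - psi H (Phi mc) (cl (-1) 0 y)) t 0 0 0 ltac:(lra) ltac:(lra)).
    simpl in Q. rewrite cl_id in Q by lra.
    assert (0 <= psi H (Phi mc) t - psi H (Phi mc) 0).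
    { apply Q. apply cminus. apply ccst. apply Hpsc.
      intros y Hy. rewrite cl_id by lra.
      assert (psi H (Phi mc) y <= psi H (Phi mc) t) by (apply (psi_mono rho); auto; lra). lra. }
    lra. }
  intros p Hp. rewrite Hfk by auto. apply Rmult_le_pos.
  apply pow_le. left. apply (h_Hp_pos _ _ HY); auto.
  destruct (Req_dec p 0) as [->|]. lra.
  destruct (Req_dec p (-1)) as [->|]. rewrite Hps0. left. apply Rinv_0_lt_compat. apply (c0_pos rho); auto.
  specialize (Hpsi p ltac:(lra)). lra.
Qed.

Lemma mk_hyp1 alpha rho H :
  Ck_alpha_interval 2 alpha rho ->
  (forall p, -1 <= p <= 0 -> 0 < rho p) ->
  (forall p, -1 <= p <= 0 -> Derive rho p <= 0) ->
  Ck_alpha_interval 3 alpha H ->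
  (forall p, -1 <= p <= 0 -> 0 < Derive H p) -> hyp1 rho H.
Proof.
  intros [Rd [Rc _]] Rp Rn [Hd [Hc _]] Hp. constructor; auto.
  - intros x. exact (Rd 0%nat x ltac:(lia)).
  - intros x Hx. exact (Rc 1%nat x ltac:(lia) Hx).
  - intros x. exact (Hd 0%nat x ltac:(lia)).
  - intros x. exact (Hd 1%nat x ltac:(lia)).
  - intros x Hx. exact (Hc 2%nat x ltac:(lia) Hx).
Qed.

Lemma mk_hypw alpha w : in_X alpha w -> hypw w.
Proof.
  intros [[C1 [C2 [C3 C4]]] [Hev [Hdec HB]]]. constructor; auto.
Qed.

Theorem theorem4p4
  (alpha : R) (rho H : R -> R) (Phi : R -> R -> R) (w : R -> R -> R) (F : R) :
  0 < alpha < 1 ->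
  Ck_alpha_interval 2 alpha rho ->
  (forall p, -1 <= p <= 0 -> 0 < rho p) ->
  (forall p, -1 <= p <= 0 -> Derive rho p <= 0) ->
  Ck_alpha_interval 3 alpha H ->
  H (-1) = 0 -> H 0 = 1 ->
  (forall p, -1 <= p <= 0 -> 0 < Derive H p) ->
  is_Phi rho H Phi ->
  in_X alpha w ->
  height_eq rho H w F ->
  ( ((forall q, 0 < w q 0) ->
     (forall p, -1 <= p <= 0 -> 0 <= Derive (Phi (/ F ^ 2)) p) ->
     A_fun rho H Phi (/ F ^ 2) < 0)
  /\
    (forall mu_cr, is_mu_cr rho H Phi mu_cr -> F = / sqrt mu_cr ->
     forall q p, in_Rbar q p -> w q p = 0) ).
Proof.
  intros Ha Hr Hrp Hrn HH Hm1 H0 HHp HP HX HE.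
  assert (HY := mk_hyp1 alpha rho H Hr Hrp Hrn HH HHp).
  assert (HW := mk_hypw alpha w HX).
  split.
  - intros Hw Hnn.
    destruct (Rlt_le_dec (A_fun rho H Phi (/ F ^ 2)) 0) as [|HA]; auto. exfalso.
    destruct (core rho H Phi w F HY HW H0 HP HE Hnn) as [C1 C2].
    { intros q. apply Rmult_le_pos; auto. left; auto. }
    assert (HA0 : A_fun rho H Phi (/ F ^ 2) = 0).
    { specialize (C1 0). specialize (Hw 0). destruct (Rmult_integral _ _ C1); auto. lra. }
    specialize (C2 HA0 0 0 ltac:(unfold in_Rbar; lra)). specialize (Hw 0). lra.
  - intros mc Hcr HF q p Hqp.
    destruct Hcr as [Hmc [HA0 Hmin]].
    assert (Hmu : / F ^ 2 = mc).
    { rewrite HF. rewrite pow_inv. rewrite Rinv_inv. simpl. rewrite Rmult_1_r. apply sqrt_sqrt. lra. }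
    assert (Hnn := sturm rho H Phi mc HY HP (conj Hmc (conj HA0 Hmin))).
    rewrite <- Hmu in Hnn, HA0.
    destruct (core rho H Phi w F HY HW H0 HP HE Hnn) as [C1 C2].
    { intros q'. rewrite HA0. lra. }
    apply C2; auto.
Qed.
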